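(* Let $d>0$, $\alpha>0$, $\gamma>1$. For every $(\theta_0,W_0)\in\Omega_\gamma$ the system $$\dot\theta=G_1(\theta,W),\qquad \dot W=G_2(\theta,W),\qquad (\theta(0),W(0))=(\theta_0,W_0)$$ has a unique solution $(\theta,W)\in C^1(\mathbb{R})\times C^1(\mathbb{R})$ defined for all $t\in\mathbb{R}$ and taking values in $\Omega_\gamma$.
   Context: Fix $d>0$, $\alpha>0$, $\gamma>1$. Let $\theta_\gamma=\operatorname{artanh}(\gamma^{-1/2})$, the unique $\theta>0$ with $\cosh\theta-\gamma^{1/2}\sinh\theta=0$, and $\Omega_\gamma=\{(\theta,W)\in\mathbb{R}^2:\ \theta>0,\ W\in\mathbb{R},\ (\theta,W)\ne(\theta_\gamma,0)\}$. Put $E_\gamma(\theta,W)=\frac{d}{\gamma}(\cosh\theta-\gamma^{1/2}\sinh\theta)^2+W^2$ and $$G_1(\theta,W)=-\frac{\alpha\gamma^{1/2}W}{E_\gamma^{3/2}},\qquad G_2(\theta,W)=-\frac{1}{d^{1/2}}\Big(\frac{\gamma^{3/2}}{\cosh\theta}+\frac{1}{\sinh\theta}\Big)+\frac{\alpha d(\sinh\theta-\gamma^{1/2}\cosh\theta)(\cosh\theta-\gamma^{1/2}\sinh\theta)}{\gamma^{1/2}E_\gamma^{3/2}}.$$ (This models two coaxial circular vortex filaments with vorticities of opposite signs, radii $(d/\gamma)^{1/2}\cosh\theta$, $d^{1/2}\sinh\theta$, axial separation $W$.) *)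

(* Defs.v *)
From Stdlib Require Import Reals Lra.
Open Scope R_scope.

Definition artanh (x : R) : R := / 2 * ln ((1 + x) / (1 - x)).
Definition theta_gamma (gamma : R) : R := artanh (/ sqrt gamma).

Definition Omega (gamma th W : R) : Prop :=
  0 < th /\ (th, W) <> (theta_gamma gamma, 0).

Definition Egam (d gamma th W : R) : R :=
  d / gamma * (cosh th - sqrt gamma * sinh th) ^ 2 + W ^ 2.

Definition E32 (d gamma th W : R) : R := (sqrt (Egam d gamma th W)) ^ 3.

Definition G1 (d alpha gamma th W : R) : R :=
  - (alpha * sqrt gamma * W) / E32 d gamma th W.

Definition G2 (d alpha gamma th W : R) : R :=
  - / sqrt d * (sqrt gamma ^ 3 / cosh th + / sinh th)
  + alpha * d * (sinh th - sqrt gamma * cosh th) * (cosh th - sqrt gamma * sinh th)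
    / (sqrt gamma * E32 d gamma th W).

Definition is_global_solution (d alpha gamma th0 W0 : R) (th W : R -> R) : Prop :=
  (forall t, derivable_pt_lim th t (G1 d alpha gamma (th t) (W t))) /\
  (forall t, derivable_pt_lim W t (G2 d alpha gamma (th t) (W t))) /\
  continuity (fun t => G1 d alpha gamma (th t) (W t)) /\
  continuity (fun t => G2 d alpha gamma (th t) (W t)) /\
  th 0 = th0 /\ W 0 = W0 /\
  (forall t, Omega gamma (th t) (W t)).

(* Main.v *)
Require Import Defs.
From Stdlib Require Import Reals Lra Lia Classical ClassicalEpsilon.
From Coquelicot Require Import Coquelicot.
Open Scope R_scope.

Lemma lim_le_pass (u : nat -> R) l c K :
  Un_cv u l -> (forall n, Rabs (u n - c) <= K) -> Rabs (l - c) <= K.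
Proof.
  intros Hu Hb. destruct (Rle_or_lt (Rabs (l - c)) K) as [H|H]; auto.
  destruct (Hu (Rabs (l - c) - K)) as [N HN]; [lra|].
  specialize (HN N (le_n N)). specialize (Hb N). unfold R_dist in HN.
  pose proof (Rabs_triang (u N - c) (l - u N)).
  replace (u N - c + (l - u N)) with (l - c) in H0 by ring.
  rewrite Rabs_minus_sym in HN. lra.
Qed.

Lemma cauchy_limit (u e : nat -> R) :
  Un_cv e 0 -> (forall n m, (n <= m)%nat -> Rabs (u m - u n) <= e n) ->
  exists l, forall n, Rabs (l - u n) <= e n.
Proof.
  intros He Hu.
  assert (Hc : Cauchy_crit u).
  { intros eps Heps. destruct (He eps Heps) as [N HN]. exists N.
    intros n m Hn Hm. unfold R_dist.
    destruct (Nat.le_ge_cases n m) as [Hnm|Hnm].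
    - specialize (Hu n m Hnm). specialize (HN n Hn). unfold R_dist in HN.
      rewrite Rminus_0_r in HN. rewrite Rabs_minus_sym.
      pose proof (Rle_abs (e n)). lra.
    - specialize (Hu m n Hnm). specialize (HN m Hm). unfold R_dist in HN.
      rewrite Rminus_0_r in HN. pose proof (Rle_abs (e m)). lra. }
  destruct (Rcomplete.R_complete u Hc) as [l Hl]. exists l. intros n.
  apply (lim_le_pass (fun m => u (m + n)%nat)).
  - intros eps Heps. destruct (Hl eps Heps) as [N HN]. exists N.
    intros m Hm. apply HN. lia.
  - intros m. apply Hu. lia.
Qed.

Lemma geom_cv K : Un_cv (fun n => K * (/2)^n) 0.
Proof.
  intros eps Heps.
  destruct (Req_dec K 0) as [HK|HK].
  { exists O. intros n _. unfold R_dist. subst. rewrite Rmult_0_l, Rminus_0_r, Rabs_R0. lra. }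
  assert (Hk : 0 < Rabs K) by (apply Rabs_pos_lt; auto).
  destruct (pow_lt_1_zero (/2) ltac:(rewrite Rabs_pos_eq; lra) (eps / Rabs K)) as [N HN].
  { apply Rdiv_lt_0_compat; lra. }
  exists N. intros n Hn. unfold R_dist. rewrite Rminus_0_r, Rabs_mult.
  specialize (HN n Hn).
  apply Rmult_lt_compat_l with (r := Rabs K) in HN; auto.
  replace (Rabs K * (eps / Rabs K)) with eps in HN by (field; lra). lra.
Qed.

Lemma small_geom a K : 0 <= a -> (forall n, a <= K * (/2)^n) -> a = 0.
Proof.
  intros Ha H. destruct (Rle_or_lt a 0) as [H'|H']; [lra|].
  destruct (geom_cv K a H') as [N HN]. specialize (HN N (le_n N)).
  unfold R_dist in HN. rewrite Rminus_0_r in HN. specialize (H N).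
  pose proof (Rle_abs (K * (/2)^N)). lra.
Qed.

Lemma continuous_of_eps (f : R -> R) x :
  (forall eps, 0 < eps -> exists del, 0 < del /\ forall y, Rabs (y - x) < del -> Rabs (f y - f x) < eps) ->
  continuous f x.
Proof.
  intros H. apply continuity_pt_filterlim. unfold continuity_pt, continue_in, limit1_in, limit_in.
  intros eps Heps. destruct (H eps Heps) as [del [Hd Hy]]. exists del; split; auto.
  intros y [_ Hy']. simpl in *. unfold R_dist in *. apply Hy; auto.
Qed.

Lemma continuous_lip (f : R -> R) K x :
  (forall s t, Rabs (f s - f t) <= K * Rabs (s - t)) -> continuous f x.
Proof.
  intros H. apply continuous_of_eps. intros eps Heps.
  exists (eps / (Rabs K + 1)). split. { apply Rdiv_lt_0_compat; [lra|]. pose proof (Rabs_pos K); lra. }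
  intros y Hy. specialize (H y x). pose proof (Rle_abs K). pose proof (Rabs_pos K).
  pose proof (Rabs_pos (y - x)).
  assert (K * Rabs (y - x) <= Rabs K * Rabs (y-x)) by (apply Rmult_le_compat_r; lra).
  assert (Rabs K * Rabs (y - x) <= Rabs K * (eps / (Rabs K + 1))) by (apply Rmult_le_compat_l; lra).
  assert (Rabs K * (eps / (Rabs K + 1)) < eps).
  { apply Rmult_lt_reg_r with (Rabs K + 1); [lra|]. field_simplify; [|lra]. nra. }
  lra.
Qed.

Lemma exRI (g : R -> R) u v : (forall z, continuous g z) -> ex_RInt g u v.
Proof. intros H. apply (@ex_RInt_continuous R_CompleteNormedModule). intros; auto. Qed.

Lemma RInt_abs_le (g : R -> R) a b K :
  (forall z, continuous g z) -> (forall z, Rabs (g z) <= K) ->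
  Rabs (RInt g a b) <= K * Rabs (b - a).
Proof.
  intros Hc Hb.
  assert (Hex : forall u v, ex_RInt g u v) by (intros; apply exRI; auto).
  destruct (Rle_or_lt a b) as [H|H].
  - rewrite (Rabs_pos_eq (b - a)) by lra. rewrite Rmult_comm.
    apply abs_RInt_le_const; auto.
  - rewrite <- opp_RInt_swap by auto. unfold opp; simpl. rewrite Rabs_Ropp.
    rewrite Rabs_minus_sym, (Rabs_pos_eq (a - b)) by lra. rewrite Rmult_comm.
    apply abs_RInt_le_const; auto; lra.
Qed.

Lemma RInt_diff_ends (g : R -> R) a u v :
  (forall z, continuous g z) -> RInt g a u - RInt g a v = RInt g v u.
Proof.
  intros Hc.
  assert (Hex : forall u v, ex_RInt g u v) by (intros; apply exRI; auto).
  rewrite <- (RInt_Chasles g a v u) by auto. unfold plus; simpl. ring.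
Qed.

Lemma RInt_sub (g1 g2 : R -> R) a b :
  (forall z, continuous g1 z) -> (forall z, continuous g2 z) ->
  RInt g1 a b - RInt g2 a b = RInt (fun s => g1 s - g2 s) a b.
Proof.
  intros H1 H2.
  rewrite (RInt_minus g1 g2) by (apply exRI; auto). reflexivity.
Qed.

Lemma RInt_lip (g : R -> R) a u v K :
  (forall z, continuous g z) -> (forall z, Rabs (g z) <= K) ->
  Rabs (RInt g a u - RInt g a v) <= K * Rabs (u - v).
Proof. intros. rewrite RInt_diff_ends by auto. apply RInt_abs_le; auto. Qed.

Lemma continuous_minus_fun (g1 g2 : R -> R) z :
  continuous g1 z -> continuous g2 z -> continuous (fun s => g1 s - g2 s) z.
Proof.
  intros H1 H2. apply continuity_pt_filterlim. apply continuity_pt_minus; apply continuity_pt_filterlim; auto.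
Qed.

Lemma RInt_deriv (g : R -> R) a t :
  (forall z, continuous g z) -> derivable_pt_lim (fun u => RInt g a u) t (g t).
Proof.
  intros Hc. apply is_derive_Reals. apply (is_derive_RInt g (fun u => RInt g a u) a t).
  - apply filter_forall. intros b. apply (@RInt_correct R_CompleteNormedModule). apply exRI; auto.
  - auto.
Qed.

Lemma le_geom a b K : (forall n, a <= b + K * (/2)^n) -> a <= b.
Proof.
  intros H. destruct (Rle_or_lt a b) as [h|h]; auto.
  destruct (geom_cv K (a - b)) as [N HN]; [lra|]. specialize (HN N (le_n N)).
  unfold R_dist in HN. rewrite Rminus_0_r in HN. specialize (H N).
  pose proof (Rle_abs (K * (/2)^N)). lra.
Qed.

Lemma cauchy_limit_sig (u e : nat -> R) :
  Un_cv e 0 -> (forall n m, (n <= m)%nat -> Rabs (u m - u n) <= e n) ->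
  {l | forall n, Rabs (l - u n) <= e n}.
Proof.
  intros He Hu.
  assert (Hc : Cauchy_crit u).
  { intros eps Heps. destruct (He eps Heps) as [N HN]. exists N.
    intros n m Hn Hm. unfold R_dist.
    destruct (Nat.le_ge_cases n m) as [Hnm|Hnm].
    - specialize (Hu n m Hnm). specialize (HN n Hn). unfold R_dist in HN.
      rewrite Rminus_0_r in HN. rewrite Rabs_minus_sym.
      pose proof (Rle_abs (e n)). lra.
    - specialize (Hu m n Hnm). specialize (HN m Hm). unfold R_dist in HN.
      rewrite Rminus_0_r in HN. pose proof (Rle_abs (e m)). lra. }
  destruct (Rcomplete.R_complete u Hc) as [l Hl]. exists l. intros n.
  apply (lim_le_pass (fun m => u (m + n)%nat)).
  - intros eps Heps. destruct (Hl eps Heps) as [N HN]. exists N.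
    intros m Hm. apply HN. lia.
  - intros m. apply Hu. lia.
Qed.

Lemma loc_eq_deriv (f g : R -> R) t del l :
  0 < del -> (forall u, Rabs (u - t) < del -> f u = g u) ->
  derivable_pt_lim f t l -> derivable_pt_lim g t l.
Proof.
  intros Hd Heq Hf eps Heps. destruct (Hf eps Heps) as [d1 Hd1].
  assert (Hm : 0 < Rmin d1 del) by (apply Rmin_pos; [apply cond_pos|auto]).
  exists (mkposreal _ Hm). intros h Hh Hh'. simpl in Hh'.
  rewrite <- !Heq.
  - apply Hd1; auto. pose proof (Rmin_l d1 del); lra.
  - rewrite Rminus_diag, Rabs_R0; auto.
  - replace (t + h - t) with h by ring. pose proof (Rmin_r d1 del); lra.
Qed.

Definition inbox (p1 p2 r q1 q2 : R) := Rabs (q1 - p1) <= r /\ Rabs (q2 - p2) <= r.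

Definition LipBox (F1 F2 : R -> R -> R) p1 p2 r L M : Prop :=
  (forall q1 q2, inbox p1 p2 r q1 q2 -> Rabs (F1 q1 q2) <= M /\ Rabs (F2 q1 q2) <= M) /\
  (forall q1 q2 q1' q2', inbox p1 p2 r q1 q2 -> inbox p1 p2 r q1' q2' ->
     Rabs (F1 q1 q2 - F1 q1' q2') <= L * (Rabs (q1 - q1') + Rabs (q2 - q2')) /\
     Rabs (F2 q1 q2 - F2 q1' q2') <= L * (Rabs (q1 - q1') + Rabs (q2 - q2'))).

Definition clamp a b t := Rmax a (Rmin b t).

Lemma clamp_in a b t : a <= b -> a <= clamp a b t <= b.
Proof. intros. unfold clamp, Rmax, Rmin. repeat destruct Rle_dec; lra. Qed.

Lemma clamp_lip a b s t : a <= b -> Rabs (clamp a b s - clamp a b t) <= Rabs (s - t).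
Proof.
  intros. unfold clamp, Rmax, Rmin. repeat destruct Rle_dec;
  unfold Rabs; repeat destruct Rcase_abs; lra.
Qed.

Lemma clamp_id a b t : a <= t <= b -> clamp a b t = t.
Proof. intros. unfold clamp, Rmax, Rmin. repeat destruct Rle_dec; lra. Qed.

Fixpoint pic (F1 F2 : R -> R -> R) p1 p2 t0 h (n : nat) : R -> R * R :=
  match n with
  | O => fun _ => (p1, p2)
  | S n => fun t =>
      (p1 + RInt (fun s => F1 (fst (pic F1 F2 p1 p2 t0 h n s)) (snd (pic F1 F2 p1 p2 t0 h n s))) t0 (clamp (t0 - h) (t0 + h) t),
       p2 + RInt (fun s => F2 (fst (pic F1 F2 p1 p2 t0 h n s)) (snd (pic F1 F2 p1 p2 t0 h n s))) t0 (clamp (t0 - h) (t0 + h) t))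
  end.

Lemma comp_cont (F1 F2 : R -> R -> R) p1 p2 r L M (X Y : R -> R) K :
  LipBox F1 F2 p1 p2 r L M -> 0 <= L ->
  (forall t, inbox p1 p2 r (X t) (Y t)) ->
  (forall s t, Rabs (X s - X t) <= K * Rabs (s - t) /\ Rabs (Y s - Y t) <= K * Rabs (s - t)) ->
  forall z, continuous (fun s => F1 (X s) (Y s)) z /\ continuous (fun s => F2 (X s) (Y s)) z.
Proof.
  intros [_ HL] HL0 Hin HK z. split.
  - apply (continuous_lip _ (L * (2 * K))). intros s t.
    destruct (HL _ _ _ _ (Hin s) (Hin t)) as [H1 _]. destruct (HK s t).
    assert (L * (Rabs (X s - X t) + Rabs (Y s - Y t)) <= L * (K * Rabs (s - t) + K * Rabs (s-t)))
      by (apply Rmult_le_compat_l; lra). lra.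
  - apply (continuous_lip _ (L * (2 * K))). intros s t.
    destruct (HL _ _ _ _ (Hin s) (Hin t)) as [_ H1]. destruct (HK s t).
    assert (L * (Rabs (X s - X t) + Rabs (Y s - Y t)) <= L * (K * Rabs (s - t) + K * Rabs (s-t)))
      by (apply Rmult_le_compat_l; lra). lra.
Qed.

Lemma clamp_near t0 h t : 0 < h -> Rabs (clamp (t0 - h) (t0 + h) t - t0) <= h.
Proof. intros. pose proof (clamp_in (t0-h) (t0+h) t ltac:(lra)). unfold Rabs; destruct Rcase_abs; lra. Qed.

Lemma addK (a b : R) : a + b - a = b. Proof. ring. Qed.
Lemma addK2 (a x y : R) : a + x - (a + y) = x - y. Proof. ring. Qed.

Lemma pic_inv F1 F2 p1 p2 r L M t0 h :
  LipBox F1 F2 p1 p2 r L M -> 0 <= L -> 0 < h -> 0 <= M -> h * M <= r ->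
  forall n, (forall t, inbox p1 p2 r (fst (pic F1 F2 p1 p2 t0 h n t)) (snd (pic F1 F2 p1 p2 t0 h n t))) /\
  (forall s t, Rabs (fst (pic F1 F2 p1 p2 t0 h n s) - fst (pic F1 F2 p1 p2 t0 h n t)) <= M * Rabs (s - t) /\
               Rabs (snd (pic F1 F2 p1 p2 t0 h n s) - snd (pic F1 F2 p1 p2 t0 h n t)) <= M * Rabs (s - t)).
Proof.
  intros HLB HL Hh HM Hr. pose proof HLB as [HB _].
  induction n as [|n [IHin IHlip]].
  - simpl. split.
    + intros t. unfold inbox. rewrite !Rminus_diag, Rabs_R0. nra.
    + intros s t. rewrite !Rminus_diag, Rabs_R0. pose proof (Rabs_pos (s-t)). nra.
  - set (X := fun s => fst (pic F1 F2 p1 p2 t0 h n s)) in *.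
    set (Y := fun s => snd (pic F1 F2 p1 p2 t0 h n s)) in *.
    assert (Hc1 : forall z, continuous (fun s => F1 (X s) (Y s)) z) by (intro z; apply (comp_cont F1 F2 p1 p2 r L M X Y M HLB HL IHin IHlip z)).
    assert (Hc2 : forall z, continuous (fun s => F2 (X s) (Y s)) z) by (intro z; apply (comp_cont F1 F2 p1 p2 r L M X Y M HLB HL IHin IHlip z)).
    assert (Hb1 : forall z, Rabs (F1 (X z) (Y z)) <= M) by (intro z; apply (HB _ _ (IHin z))).
    assert (Hb2 : forall z, Rabs (F2 (X z) (Y z)) <= M) by (intro z; apply (HB _ _ (IHin z))).
    simpl. fold X Y. split.
    + intros t. unfold inbox. rewrite !addK.
      pose proof (clamp_near t0 h t Hh).
      split; eapply Rle_trans; try (apply RInt_abs_le; eauto); nra.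
    + intros s t. pose proof (clamp_lip (t0-h) (t0+h) s t ltac:(lra)).
      rewrite !addK2.
      split; eapply Rle_trans; try (apply RInt_lip; eauto); nra.
Qed.

Lemma pic_diff F1 F2 p1 p2 r L M t0 h :
  LipBox F1 F2 p1 p2 r L M -> 0 <= L -> 0 < h -> 0 <= M -> h * M <= r -> 4 * h * L <= 1 ->
  forall n t, Rabs (fst (pic F1 F2 p1 p2 t0 h (S n) t) - fst (pic F1 F2 p1 p2 t0 h n t)) +
              Rabs (snd (pic F1 F2 p1 p2 t0 h (S n) t) - snd (pic F1 F2 p1 p2 t0 h n t)) <= 2 * r * (/2)^n.
Proof.
  intros HLB HL Hh HM Hr HhL. pose proof HLB as [HB HLip].
  pose proof (pic_inv F1 F2 p1 p2 r L M t0 h HLB HL Hh HM Hr) as Hinv.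
  induction n as [|n IH].
  - intros t. destruct (Hinv 1%nat) as [Hin _]. specialize (Hin t). destruct Hin as [Ha Hb].
    simpl in *. lra.
  - intros t.
    set (X := fun s => fst (pic F1 F2 p1 p2 t0 h n s)).
    set (Y := fun s => snd (pic F1 F2 p1 p2 t0 h n s)).
    set (X' := fun s => fst (pic F1 F2 p1 p2 t0 h (S n) s)).
    set (Y' := fun s => snd (pic F1 F2 p1 p2 t0 h (S n) s)).
    destruct (Hinv n) as [Hin Hlip]. destruct (Hinv (S n)) as [Hin' Hlip'].
    fold X Y in Hin, Hlip. fold X' Y' in Hin', Hlip'.
    pose proof (comp_cont F1 F2 p1 p2 r L M X Y M HLB HL Hin Hlip) as Hc.
    pose proof (comp_cont F1 F2 p1 p2 r L M X' Y' M HLB HL Hin' Hlip') as Hc'.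
    change (pic F1 F2 p1 p2 t0 h (S (S n)) t) with
      (p1 + RInt (fun s => F1 (X' s) (Y' s)) t0 (clamp (t0 - h) (t0 + h) t),
       p2 + RInt (fun s => F2 (X' s) (Y' s)) t0 (clamp (t0 - h) (t0 + h) t)).
    change (pic F1 F2 p1 p2 t0 h (S n) t) with
      (p1 + RInt (fun s => F1 (X s) (Y s)) t0 (clamp (t0 - h) (t0 + h) t),
       p2 + RInt (fun s => F2 (X s) (Y s)) t0 (clamp (t0 - h) (t0 + h) t)).
    simpl fst; simpl snd.
    rewrite !addK2.
    rewrite !RInt_sub by (intro z; first [apply (Hc' z) | apply (Hc z)]).
    pose proof (clamp_near t0 h t Hh).
    assert (Hd : forall s, Rabs (X' s - X s) + Rabs (Y' s - Y s) <= 2 * r * (/2)^n) by (intro s; apply IH).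
    assert (Hr0 : 0 <= r * (/2)^n). { apply Rmult_le_pos; [nra|apply pow_le; lra]. }
    assert (B1 : Rabs (RInt (fun s => F1 (X' s) (Y' s) - F1 (X s) (Y s)) t0 (clamp (t0 - h) (t0 + h) t))
                 <= (L * (2 * r * (/2)^n)) * h).
    { eapply Rle_trans. apply RInt_abs_le.
      - intro z. apply continuous_minus_fun; [apply (Hc' z)|apply (Hc z)].
      - intro z. destruct (HLip _ _ _ _ (Hin' z) (Hin z)) as [H1 _].
        eapply Rle_trans; [apply H1|]. apply Rmult_le_compat_l; auto.
      - apply Rmult_le_compat_l; [|auto]. nra. }
    assert (B2 : Rabs (RInt (fun s => F2 (X' s) (Y' s) - F2 (X s) (Y s)) t0 (clamp (t0 - h) (t0 + h) t))
                 <= (L * (2 * r * (/2)^n)) * h).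
    { eapply Rle_trans. apply RInt_abs_le.
      - intro z. apply continuous_minus_fun; [apply (Hc' z)|apply (Hc z)].
      - intro z. destruct (HLip _ _ _ _ (Hin' z) (Hin z)) as [_ H1].
        eapply Rle_trans; [apply H1|]. apply Rmult_le_compat_l; auto.
      - apply Rmult_le_compat_l; [|auto]. nra. }
    simpl pow. nra.
Qed.

Lemma deriv_const_plus (c : R) (f : R -> R) t l :
  derivable_pt_lim f t l -> derivable_pt_lim (fun u => c + f u) t l.
Proof.
  intros H. replace l with (0 + l) by ring.
  apply (derivable_pt_lim_plus (fun _ => c) f). apply derivable_pt_lim_const. auto.
Qed.

Lemma tri3 a b c : Rabs (a - c) <= Rabs (a - b) + Rabs (b - c).
Proof. replace (a - c) with ((a - b) + (b - c)) by ring. apply Rabs_triang. Qed.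

Lemma pic_cauchy F1 F2 p1 p2 r L M t0 h :
  LipBox F1 F2 p1 p2 r L M -> 0 <= L -> 0 < h -> 0 <= M -> h * M <= r -> 4 * h * L <= 1 ->
  forall n m t, (n <= m)%nat ->
   Rabs (fst (pic F1 F2 p1 p2 t0 h m t) - fst (pic F1 F2 p1 p2 t0 h n t)) <= 4 * r * (/2)^n /\
   Rabs (snd (pic F1 F2 p1 p2 t0 h m t) - snd (pic F1 F2 p1 p2 t0 h n t)) <= 4 * r * (/2)^n.
Proof.
  intros HLB HL Hh HM Hr HhL.
  pose proof (pic_diff F1 F2 p1 p2 r L M t0 h HLB HL Hh HM Hr HhL) as Hd.
  assert (Hr0 : 0 <= r) by nra.
  assert (Hk : forall n k t,
    Rabs (fst (pic F1 F2 p1 p2 t0 h (n + k) t) - fst (pic F1 F2 p1 p2 t0 h n t)) <= 4 * r * ((/2)^n - (/2)^(n+k)) /\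
    Rabs (snd (pic F1 F2 p1 p2 t0 h (n + k) t) - snd (pic F1 F2 p1 p2 t0 h n t)) <= 4 * r * ((/2)^n - (/2)^(n+k))).
  { intros n k t. induction k as [|k IH].
    - rewrite Nat.add_0_r, !Rminus_diag, Rabs_R0, Rmult_0_r. lra.
    - rewrite Nat.add_succ_r. specialize (Hd (n + k)%nat t).
      destruct IH as [I1 I2].
      pose proof (tri3 (fst (pic F1 F2 p1 p2 t0 h (S (n + k)) t)) (fst (pic F1 F2 p1 p2 t0 h (n + k) t)) (fst (pic F1 F2 p1 p2 t0 h n t))).
      pose proof (tri3 (snd (pic F1 F2 p1 p2 t0 h (S (n + k)) t)) (snd (pic F1 F2 p1 p2 t0 h (n + k) t)) (snd (pic F1 F2 p1 p2 t0 h n t))).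
      pose proof (Rabs_pos (fst (pic F1 F2 p1 p2 t0 h (S (n + k)) t) - fst (pic F1 F2 p1 p2 t0 h (n + k) t))).
      pose proof (Rabs_pos (snd (pic F1 F2 p1 p2 t0 h (S (n + k)) t) - snd (pic F1 F2 p1 p2 t0 h (n + k) t))).
      rewrite <- Nat.add_succ_r. simpl pow. rewrite Nat.add_succ_r. simpl pow.
      split; nra. }
  intros n m t Hnm. replace m with (n + (m - n))%nat by lia.
  destruct (Hk n (m - n)%nat t) as [A B].
  assert (0 <= (/2)^(n + (m - n))) by (apply pow_le; lra).
  split; nra.
Qed.

Lemma picard F1 F2 p1 p2 r L M t0 h :
  LipBox F1 F2 p1 p2 r L M -> 0 <= L -> 0 < h -> 0 <= M -> h * M <= r -> 4 * h * L <= 1 ->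
  exists X Y : R -> R, X t0 = p1 /\ Y t0 = p2 /\ (forall t, inbox p1 p2 r (X t) (Y t)) /\
    (forall t, t0 - h < t < t0 + h ->
       derivable_pt_lim X t (F1 (X t) (Y t)) /\ derivable_pt_lim Y t (F2 (X t) (Y t))).
Proof.
  intros HLB HL Hh HM Hr HhL. pose proof HLB as [HB HLip].
  assert (Hr0 : 0 <= r) by nra.
  pose proof (pic_cauchy F1 F2 p1 p2 r L M t0 h HLB HL Hh HM Hr HhL) as HC.
  pose proof (pic_inv F1 F2 p1 p2 r L M t0 h HLB HL Hh HM Hr) as Hinv.
  set (P := pic F1 F2 p1 p2 t0 h) in *.
  assert (HlX : forall t, {l | forall n, Rabs (l - fst (P n t)) <= 4 * r * (/2)^n}).
  { intros t. apply cauchy_limit_sig. apply geom_cv. intros n m Hnm. apply (HC n m t Hnm). }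
  assert (HlY : forall t, {l | forall n, Rabs (l - snd (P n t)) <= 4 * r * (/2)^n}).
  { intros t. apply cauchy_limit_sig. apply geom_cv. intros n m Hnm. apply (HC n m t Hnm). }
  set (X := fun t => proj1_sig (HlX t)). set (Y := fun t => proj1_sig (HlY t)).
  assert (HX : forall n t, Rabs (X t - fst (P n t)) <= 4 * r * (/2)^n) by (intros n t; apply (proj2_sig (HlX t))).
  assert (HY : forall n t, Rabs (Y t - snd (P n t)) <= 4 * r * (/2)^n) by (intros n t; apply (proj2_sig (HlY t))).
  clearbody X Y.
  assert (Hin : forall t, inbox p1 p2 r (X t) (Y t)).
  { intros t. split.
    - apply (le_geom _ _ (4 * r)). intros n. destruct (Hinv n) as [Hi _]. destruct (Hi t) as [A _].
      pose proof (tri3 (X t) (fst (P n t)) p1). specialize (HX n t). lra.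
    - apply (le_geom _ _ (4 * r)). intros n. destruct (Hinv n) as [Hi _]. destruct (Hi t) as [_ A].
      pose proof (tri3 (Y t) (snd (P n t)) p2). specialize (HY n t). lra. }
  assert (Hlip : forall s t, Rabs (X s - X t) <= M * Rabs (s - t) /\ Rabs (Y s - Y t) <= M * Rabs (s - t)).
  { intros s t. split.
    - apply (le_geom _ _ (8 * r)). intros n. destruct (Hinv n) as [_ Hl]. destruct (Hl s t) as [A _].
      pose proof (tri3 (X s) (fst (P n s)) (X t)). pose proof (tri3 (fst (P n s)) (fst (P n t)) (X t)).
      pose proof (HX n s). pose proof (HX n t). rewrite Rabs_minus_sym in H2. lra.
    - apply (le_geom _ _ (8 * r)). intros n. destruct (Hinv n) as [_ Hl]. destruct (Hl s t) as [_ A].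
      pose proof (tri3 (Y s) (snd (P n s)) (Y t)). pose proof (tri3 (snd (P n s)) (snd (P n t)) (Y t)).
      pose proof (HY n s). pose proof (HY n t). rewrite Rabs_minus_sym in H2. lra. }
  pose proof (comp_cont F1 F2 p1 p2 r L M X Y M HLB HL Hin Hlip) as Hc.
  assert (Hc1 : forall z, continuous (fun s => F1 (X s) (Y s)) z) by (intro z; apply (Hc z)).
  assert (Hc2 : forall z, continuous (fun s => F2 (X s) (Y s)) z) by (intro z; apply (Hc z)).
  set (cl := clamp (t0 - h) (t0 + h)).
  assert (Hint : forall t, X t = p1 + RInt (fun s => F1 (X s) (Y s)) t0 (cl t) /\
                           Y t = p2 + RInt (fun s => F2 (X s) (Y s)) t0 (cl t)).
  { intros t. pose proof (clamp_near t0 h t Hh) as Hcl. fold cl in Hcl.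
    split; apply Rminus_diag_uniq; apply Rabs_eq_0; apply Rle_antisym; try apply Rabs_pos;
      apply (le_geom _ 0 (4 * r)); intros n; rewrite Rplus_0_l;
      destruct (Hinv n) as [Hi Hl]; pose proof (comp_cont F1 F2 p1 p2 r L M _ _ M HLB HL Hi Hl) as Hcn.
    - pose proof (HX (S n) t) as A.
      change (fst (P (S n) t)) with (p1 + RInt (fun s => F1 (fst (P n s)) (snd (P n s))) t0 (cl t)) in A.
      assert (B : Rabs (RInt (fun s => F1 (fst (P n s)) (snd (P n s)) - F1 (X s) (Y s)) t0 (cl t)) <= (L * (8 * r * (/2)^n)) * h).
      { apply Rle_trans with ((L * (8 * r * (/2)^n)) * Rabs (cl t - t0)). apply RInt_abs_le.
        - intro z. apply continuous_minus_fun; [apply (Hcn z)|apply (Hc1 z)].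
        - intro z. destruct (HLip _ _ _ _ (Hi z) (Hin z)) as [H1 _].
          eapply Rle_trans; [apply H1|]. apply Rmult_le_compat_l; auto.
          pose proof (HX n z) as Ha. pose proof (HY n z) as Hb. rewrite Rabs_minus_sym in Ha, Hb. lra.
        - apply Rmult_le_compat_l; [|auto]. assert (0 <= (/2)^n) by (apply pow_le; lra).
          apply Rmult_le_pos; [auto|]. apply Rmult_le_pos; [lra|auto]. }
      rewrite <- RInt_sub in B by (intro z; first [apply (Hcn z) | apply (Hc1 z)]).
      simpl pow in A.
      pose proof (tri3 (X t) (p1 + RInt (fun s => F1 (fst (P n s)) (snd (P n s))) t0 (cl t)) (p1 + RInt (fun s => F1 (X s) (Y s)) t0 (cl t))).
      rewrite addK2 in H. assert (0 <= (/2)^n) by (apply pow_le; lra).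
      assert (L * (8 * r * (/ 2) ^ n) * h <= 2 * r * (/2)^n). { 
        replace (L * (8 * r * (/ 2) ^ n) * h) with ((4 * h * L) * (2 * r * (/2)^n)) by ring.
        assert (0 <= 2 * r * (/2)^n) by nra. nra. }
      lra.
    - pose proof (HY (S n) t) as A.
      change (snd (P (S n) t)) with (p2 + RInt (fun s => F2 (fst (P n s)) (snd (P n s))) t0 (cl t)) in A.
      assert (B : Rabs (RInt (fun s => F2 (fst (P n s)) (snd (P n s)) - F2 (X s) (Y s)) t0 (cl t)) <= (L * (8 * r * (/2)^n)) * h).
      { apply Rle_trans with ((L * (8 * r * (/2)^n)) * Rabs (cl t - t0)). apply RInt_abs_le.
        - intro z. apply continuous_minus_fun; [apply (Hcn z)|apply (Hc2 z)].
        - intro z. destruct (HLip _ _ _ _ (Hi z) (Hin z)) as [_ H1].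
          eapply Rle_trans; [apply H1|]. apply Rmult_le_compat_l; auto.
          pose proof (HX n z) as Ha. pose proof (HY n z) as Hb. rewrite Rabs_minus_sym in Ha, Hb. lra.
        - apply Rmult_le_compat_l; [|auto]. assert (0 <= (/2)^n) by (apply pow_le; lra).
          apply Rmult_le_pos; [auto|]. apply Rmult_le_pos; [lra|auto]. }
      rewrite <- RInt_sub in B by (intro z; first [apply (Hcn z) | apply (Hc2 z)]).
      simpl pow in A.
      pose proof (tri3 (Y t) (p2 + RInt (fun s => F2 (fst (P n s)) (snd (P n s))) t0 (cl t)) (p2 + RInt (fun s => F2 (X s) (Y s)) t0 (cl t))).
      rewrite addK2 in H. assert (0 <= (/2)^n) by (apply pow_le; lra).
      assert (L * (8 * r * (/ 2) ^ n) * h <= 2 * r * (/2)^n). { 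
        replace (L * (8 * r * (/ 2) ^ n) * h) with ((4 * h * L) * (2 * r * (/2)^n)) by ring.
        assert (0 <= 2 * r * (/2)^n) by nra. nra. }
      lra. }
  exists X, Y.
  assert (Hcl0 : cl t0 = t0) by (apply clamp_id; lra).
  split; [|split; [|split]].
  - destruct (Hint t0) as [A _]. rewrite A, Hcl0, RInt_point. unfold zero; simpl. ring.
  - destruct (Hint t0) as [_ A]. rewrite A, Hcl0, RInt_point. unfold zero; simpl. ring.
  - auto.
  - intros t Ht.
    assert (Hdel : 0 < Rmin (t - (t0 - h)) (t0 + h - t)) by (apply Rmin_pos; lra).
    assert (Hloc : forall u, Rabs (u - t) < Rmin (t - (t0 - h)) (t0 + h - t) -> cl u = u).
    { intros u Hu. apply clamp_id. pose proof (Rmin_l (t - (t0 - h)) (t0 + h - t)).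
      pose proof (Rmin_r (t - (t0 - h)) (t0 + h - t)). unfold Rabs in Hu; destruct Rcase_abs in Hu; lra. }
    split.
    + apply (loc_eq_deriv (fun u => p1 + RInt (fun s => F1 (X s) (Y s)) t0 u) X t _ _ Hdel).
      * intros u Hu. rewrite (proj1 (Hint u)), Hloc; auto.
      * apply deriv_const_plus. apply (RInt_deriv (fun s => F1 (X s) (Y s))). auto.
    + apply (loc_eq_deriv (fun u => p2 + RInt (fun s => F2 (X s) (Y s)) t0 u) Y t _ _ Hdel).
      * intros u Hu. rewrite (proj2 (Hint u)), Hloc; auto.
      * apply deriv_const_plus. apply (RInt_deriv (fun s => F2 (X s) (Y s))). auto.
Qed.

Lemma connect_fwd (Q : R -> Prop) a b tau :
  a < tau < b ->
  (forall t, a < t < b -> Q t -> exists del, 0 < del /\ forall u, Rabs (u - t) < del -> Q u) ->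
  (forall t, a < t < b -> (forall del, 0 < del -> exists u, Rabs (u - t) < del /\ Q u) -> Q t) ->
  Q tau -> forall t, tau <= t < b -> Q t.
Proof.
  intros Htau Hop Hcl Q0 t Ht.
  set (E := fun s => tau <= s <= t /\ forall u, tau <= u <= s -> Q u).
  assert (Hb : bound E) by (exists t; intros s [Hs _]; lra).
  assert (He : exists s, E s) by (exists tau; split; [lra|]; intros u Hu; replace u with tau by lra; auto).
  destruct (completeness E Hb He) as [m [Hub Hlub]].
  assert (Hmt : m <= t) by (apply Hlub; intros s [Hs _]; lra).
  assert (Htm : tau <= m) by (apply Hub; destruct He as [s Hs]; unfold E; split; [lra|]; intros u Hu; replace u with tau by lra; auto).
  assert (Hbelow : forall u, tau <= u < m -> Q u).
  { intros u Hu. destruct (classic (exists s, E s /\ u <= s)) as [[s [[Hs1 Hs2] Hs3]]|Hno].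
    - apply Hs2. lra.
    - exfalso. assert (m <= u). { apply Hlub. intros s Hs. destruct (Rle_or_lt s u) as [h|h]; auto.
        exfalso; apply Hno; exists s; split; auto; lra. } lra. }
  assert (Qm : Q m).
  { destruct (Req_dec m tau) as [e|e]; [subst; auto|].
    apply Hcl; [lra|]. intros del Hdel. exists (Rmax tau (m - del/2)). split.
    - unfold Rmax; destruct Rle_dec; unfold Rabs; destruct Rcase_abs; lra.
    - apply Hbelow. unfold Rmax; destruct Rle_dec; lra. }
  destruct (Req_dec m t) as [e|e]; [subst; auto|].
  exfalso. destruct (Hop m ltac:(lra) Qm) as [del [Hdel Hq]].
  assert (E (Rmin (m + del/2) t)).
  { split. { unfold Rmin; destruct Rle_dec; lra. }
    intros u Hu. destruct (Rlt_or_le u m) as [h|h]. apply Hbelow; lra.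
    apply Hq. unfold Rmin in Hu; destruct Rle_dec in Hu; unfold Rabs; destruct Rcase_abs; lra. }
  specialize (Hub _ H). unfold Rmin in Hub; destruct Rle_dec in Hub; lra.
Qed.

Lemma connect (Q : R -> Prop) a b tau :
  a < tau < b ->
  (forall t, a < t < b -> Q t -> exists del, 0 < del /\ forall u, Rabs (u - t) < del -> Q u) ->
  (forall t, a < t < b -> (forall del, 0 < del -> exists u, Rabs (u - t) < del /\ Q u) -> Q t) ->
  Q tau -> forall t, a < t < b -> Q t.
Proof.
  intros Htau Hop Hcl Q0 t Ht. destruct (Rle_or_lt tau t) as [h|h].
  - apply (connect_fwd Q a b tau); auto; lra.
  - replace t with (- - t) by ring.
    apply (connect_fwd (fun s => Q (- s)) (-b) (-a) (-tau)); try lra.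
    + intros s Hs Qs. destruct (Hop (-s) ltac:(lra) Qs) as [del [Hd Hq]]. exists del; split; auto.
      intros u Hu. apply Hq. replace (- u - - s) with (- (u - s)) by ring. rewrite Rabs_Ropp; auto.
    + intros s Hs H. apply Hcl; [lra|]. intros del Hd. destruct (H del Hd) as [u [Hu Qu]].
      exists (-u). split; auto. replace (- u - - s) with (- (u - s)) by ring. rewrite Rabs_Ropp; auto.
    + replace (- - tau) with tau by ring; auto.
Qed.

Lemma cont_eps (f : R -> R) x l :
  derivable_pt_lim f x l -> forall eps, 0 < eps -> exists del, 0 < del /\ forall y, Rabs (y - x) < del -> Rabs (f y - f x) < eps.
Proof.
  intros H eps Heps.
  assert (Hc : continuity_pt f x) by (apply derivable_continuous_pt; exists l; auto).
  destruct (Hc eps Heps) as [del [Hd Hy]]. exists del; split; auto.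
  intros y Hy'. destruct (Req_dec y x) as [e|e].
  - subst. rewrite Rminus_diag, Rabs_R0; auto.
  - apply (Hy y). split; auto. split; [exact I|auto].
Qed.

Definition LocLip (F1 F2 : R -> R -> R) (U : R -> R -> Prop) :=
  forall p1 p2, U p1 p2 -> exists r L M, 0 < r /\ 0 <= L /\ 0 <= M /\ LipBox F1 F2 p1 p2 r L M /\
     (forall q1 q2, inbox p1 p2 r q1 q2 -> U q1 q2).

Definition solOn (F1 F2 : R -> R -> R) (U : R -> R -> Prop) (a b : R) (X Y : R -> R) :=
  forall t, a < t < b -> derivable_pt_lim X t (F1 (X t) (Y t)) /\ derivable_pt_lim Y t (F2 (X t) (Y t)) /\ U (X t) (Y t).

Lemma min2 a b : 0 < a -> 0 < b -> exists d, 0 < d /\ d <= a /\ d <= b.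
Proof. intros. exists (Rmin a b). split. apply Rmin_pos; auto. split; [apply Rmin_l|apply Rmin_r]. Qed.

Lemma loc_uniq F1 F2 U a b X Y X' Y' t1 :
  LocLip F1 F2 U -> solOn F1 F2 U a b X Y -> solOn F1 F2 U a b X' Y' -> a < t1 < b ->
  X t1 = X' t1 -> Y t1 = Y' t1 ->
  exists del, 0 < del /\ forall t, Rabs (t - t1) < del -> X t = X' t /\ Y t = Y' t.
Proof.
  intros HLL HS HS' Ht1 EX EY.
  destruct (HS t1 Ht1) as [dX [dY HU]]. destruct (HS' t1 Ht1) as [dX' [dY' _]].
  destruct (HLL _ _ HU) as [r [L [M [Hr [HL [HM [[HB HLip] HUb]]]]]]].
  destruct (cont_eps _ _ _ dX r Hr) as [e1 [He1 C1]].
  destruct (cont_eps _ _ _ dY r Hr) as [e2 [He2 C2]].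
  destruct (cont_eps _ _ _ dX' r Hr) as [e3 [He3 C3]].
  destruct (cont_eps _ _ _ dY' r Hr) as [e4 [He4 C4]].
  assert (HLr : 0 < / (4 * (L + 1))) by (apply Rinv_0_lt_compat; lra).
  destruct (min2 _ _ He1 He2) as [d1 [Hd1 [Hd1a Hd1b]]].
  destruct (min2 _ _ He3 He4) as [d2 [Hd2 [Hd2a Hd2b]]].
  destruct (min2 (t1 - a) (b - t1) ltac:(lra) ltac:(lra)) as [d3 [Hd3 [Hd3a Hd3b]]].
  destruct (min2 _ _ Hd1 Hd2) as [d4 [Hd4 [Hd4a Hd4b]]].
  destruct (min2 _ _ Hd3 HLr) as [d5 [Hd5 [Hd5a Hd5b]]].
  destruct (min2 _ _ Hd4 Hd5) as [del0 [Hdel0 [Hdela Hdelb]]].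
  set (del := del0 / 2). assert (Hdel : 0 < del) by (unfold del; lra). assert (Hdd : del < del0) by (unfold del; lra).
  clearbody del.
  assert (HdL : L * del <= / 4).
  { apply Rle_trans with (L * / (4 * (L + 1))). apply Rmult_le_compat_l; lra.
    apply Rmult_le_reg_r with (4 * (L + 1)); [lra|]. field_simplify; lra. }
  assert (Hnear : forall t, Rabs (t - t1) <= del -> a < t < b /\ inbox (X t1) (Y t1) r (X t) (Y t) /\ inbox (X t1) (Y t1) r (X' t) (Y' t)).
  { intros t Ht. split; [unfold Rabs in Ht; destruct Rcase_abs in Ht; split; lra|].
    assert (Rabs (t - t1) < e1) by lra. assert (Rabs (t - t1) < e2) by lra.
    assert (Rabs (t - t1) < e3) by lra. assert (Rabs (t - t1) < e4) by lra.
    pose proof (C1 t H). pose proof (C2 t H0). pose proof (C3 t H1). pose proof (C4 t H2).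
    rewrite <- EX in H5. rewrite <- EY in H6. unfold inbox. lra. }
  set (D := fun t => Rabs (X t - X' t) + Rabs (Y t - Y' t)).
  assert (HD : forall n t, Rabs (t - t1) <= del -> D t <= 4 * r * (/2)^n).
  { induction n as [|n IH].
    - intros t Ht. destruct (Hnear t Ht) as [_ [[A B] [A' B']]]. unfold D. simpl.
      pose proof (tri3 (X t) (X t1) (X' t)). pose proof (tri3 (Y t) (Y t1) (Y' t)).
      rewrite (Rabs_minus_sym (X t1)) in H. rewrite (Rabs_minus_sym (Y t1)) in H0. lra.
    - intros t Ht.
      assert (Hmvt : forall (G : R -> R -> R) (U1 U2 : R -> R), (forall c, a < c < b -> derivable_pt_lim U1 c (G (X c) (Y c)) /\ derivable_pt_lim U2 c (G (X' c) (Y' c))) ->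
          U1 t1 = U2 t1 -> (forall c, Rabs (c - t1) <= del -> Rabs (G (X c) (Y c) - G (X' c) (Y' c)) <= L * D c) ->
          Rabs (U1 t - U2 t) <= r * (/2)^n).
      { intros G U1 U2 HG E0 HGL.
        destruct (MVT_abs (fun s => U1 s - U2 s) (fun c => G (X c) (Y c) - G (X' c) (Y' c)) t1 t) as [c [Hc1 Hc2]].
        - intros c Hc. assert (Rabs (c - t1) <= del).
          { unfold Rmin, Rmax in Hc. destruct Rle_dec in Hc; unfold Rabs; destruct Rcase_abs; unfold Rabs in Ht; destruct Rcase_abs in Ht; lra. }
          destruct (Hnear c H) as [Hab _]. destruct (HG c Hab). apply derivable_pt_lim_minus; auto.
        - rewrite E0, Rminus_diag in Hc1. rewrite Rminus_0_r in Hc1. rewrite Hc1.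
          assert (Hc3 : Rabs (c - t1) <= del).
          { unfold Rmin, Rmax in Hc2. destruct Rle_dec in Hc2; unfold Rabs; destruct Rcase_abs; unfold Rabs in Ht; destruct Rcase_abs in Ht; lra. }
          pose proof (HGL c Hc3). pose proof (IH c Hc3).
          assert (0 <= (/2)^n) by (apply pow_le; lra).
          apply Rle_trans with ((L * D c) * del). apply Rmult_le_compat; [apply Rabs_pos|apply Rabs_pos|exact H|exact Ht].
          apply Rle_trans with ((L * (4 * r * (/2)^n)) * del). apply Rmult_le_compat_r; [lra|]. apply Rmult_le_compat_l; [lra|exact H0].
          replace (L * (4 * r * (/ 2) ^ n) * del) with ((L * del) * (4 * r * (/2)^n)) by ring.
          apply Rle_trans with (/4 * (4 * r * (/2)^n)). apply Rmult_le_compat_r; [|lra]. nra. lra. }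
      assert (A1 : Rabs (X t - X' t) <= r * (/2)^n).
      { apply (Hmvt F1 X X'); auto.
        - intros c Hc. split; [apply (HS c Hc)|apply (HS' c Hc)].
        - intros c Hc. destruct (Hnear c Hc) as [_ [I1 I2]]. apply (HLip _ _ _ _ I1 I2). }
      assert (A2 : Rabs (Y t - Y' t) <= r * (/2)^n).
      { apply (Hmvt F2 Y Y'); auto.
        - intros c Hc. split; [apply (HS c Hc)|apply (HS' c Hc)].
        - intros c Hc. destruct (Hnear c Hc) as [_ [I1 I2]]. apply (HLip _ _ _ _ I1 I2). }
      unfold D. simpl. lra. }
  exists del. split; auto. intros t Ht.
  assert (Ht' : Rabs (t - t1) <= del) by lra.
  assert (D t = 0) by (apply (small_geom _ (4 * r)); [unfold D; pose proof (Rabs_pos (X t - X' t)); pose proof (Rabs_pos (Y t - Y' t)); lra | intros n; apply HD; auto]).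
  unfold D in H. pose proof (Rabs_pos (X t - X' t)); pose proof (Rabs_pos (Y t - Y' t)).
  split; apply Rminus_diag_uniq; apply Rabs_eq_0; lra.
Qed.

Lemma uniq F1 F2 U a b X Y X' Y' tau :
  LocLip F1 F2 U -> solOn F1 F2 U a b X Y -> solOn F1 F2 U a b X' Y' -> a < tau < b ->
  X tau = X' tau -> Y tau = Y' tau ->
  forall t, a < t < b -> X t = X' t /\ Y t = Y' t.
Proof.
  intros HLL HS HS' Htau EX EY.
  apply (connect (fun t => X t = X' t /\ Y t = Y' t) a b tau); auto.
  - intros t Ht [E1 E2]. apply (loc_uniq F1 F2 U a b X Y X' Y' t); auto.
  - intros t Ht H. destruct (HS t Ht) as [dX [dY _]]. destruct (HS' t Ht) as [dX' [dY' _]].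
    apply NNPP. intros Hn.
    assert (Hn' : X t <> X' t \/ Y t <> Y' t) by tauto.
    destruct Hn' as [Hne|Hne].
    + assert (He : 0 < Rabs (X t - X' t) / 2) by (apply Rdiv_lt_0_compat; [apply Rabs_pos_lt; lra|lra]).
      destruct (cont_eps _ _ _ dX _ He) as [e1 [He1 C1]]. destruct (cont_eps _ _ _ dX' _ He) as [e2 [He2 C2]].
      destruct (min2 _ _ He1 He2) as [e [Hee [Ha Hb]]].
      destruct (H e Hee) as [u [Hu [Q1 _]]].
      specialize (C1 u ltac:(lra)). specialize (C2 u ltac:(lra)). rewrite Q1 in C1.
      pose proof (tri3 (X t) (X' u) (X' t)). rewrite Rabs_minus_sym in C1. lra.
    + assert (He : 0 < Rabs (Y t - Y' t) / 2) by (apply Rdiv_lt_0_compat; [apply Rabs_pos_lt; lra|lra]).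
      destruct (cont_eps _ _ _ dY _ He) as [e1 [He1 C1]]. destruct (cont_eps _ _ _ dY' _ He) as [e2 [He2 C2]].
      destruct (min2 _ _ He1 He2) as [e [Hee [Ha Hb]]].
      destruct (H e Hee) as [u [Hu [_ Q1]]].
      specialize (C1 u ltac:(lra)). specialize (C2 u ltac:(lra)). rewrite Q1 in C1.
      pose proof (tri3 (Y t) (Y' u) (Y' t)). rewrite Rabs_minus_sym in C1. lra.
Qed.

Lemma solOn_sub F1 F2 U a b a' b' X Y :
  a <= a' -> b' <= b -> solOn F1 F2 U a b X Y -> solOn F1 F2 U a' b' X Y.
Proof. intros H1 H2 HS t Ht. apply HS. lra. Qed.

Lemma solOn_eq F1 F2 U a b X Y Z V :
  solOn F1 F2 U a b X Y -> (forall t, a < t < b -> Z t = X t /\ V t = Y t) -> solOn F1 F2 U a b Z V.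
Proof.
  intros HS Heq t Ht. destruct (HS t Ht) as [dX [dY HU]].
  assert (Hd : 0 < Rmin (t - a) (b - t)) by (apply Rmin_pos; lra).
  assert (Hl : forall u, Rabs (u - t) < Rmin (t - a) (b - t) -> a < u < b).
  { intros u Hu. pose proof (Rmin_l (t - a) (b - t)). pose proof (Rmin_r (t - a) (b - t)).
    unfold Rabs in Hu; destruct Rcase_abs in Hu; split; lra. }
  destruct (Heq t Ht) as [E1 E2]. rewrite E1, E2. split; [|split]; auto.
  - apply (loc_eq_deriv X Z t _ _ Hd); auto. intros u Hu. symmetry. apply (Heq u (Hl u Hu)).
  - apply (loc_eq_deriv Y V t _ _ Hd); auto. intros u Hu. symmetry. apply (Heq u (Hl u Hu)).
Qed.

Lemma glue F1 F2 U a b c d X Y X' Y' :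
  solOn F1 F2 U a b X Y -> solOn F1 F2 U c d X' Y' -> a < c -> c < b -> b < d ->
  (forall t, c < t < b -> X t = X' t /\ Y t = Y' t) ->
  exists Z V, solOn F1 F2 U a d Z V /\ (forall t, a < t < b -> Z t = X t /\ V t = Y t)
     /\ (forall t, c < t < d -> Z t = X' t /\ V t = Y' t).
Proof.
  intros HS HS' H1 H2 H3 Heq.
  set (m := (c + b) / 2).
  exists (fun t => if Rlt_dec t m then X t else X' t), (fun t => if Rlt_dec t m then Y t else Y' t).
  assert (A : forall t, a < t < b -> (if Rlt_dec t m then X t else X' t) = X t /\ (if Rlt_dec t m then Y t else Y' t) = Y t).
  { intros t Ht. destruct Rlt_dec; [auto|]. destruct (Heq t); [unfold m in *; lra|]. split; auto. }
  assert (B : forall t, c < t < d -> (if Rlt_dec t m then X t else X' t) = X' t /\ (if Rlt_dec t m then Y t else Y' t) = Y' t).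
  { intros t Ht. destruct Rlt_dec; [|auto]. apply Heq. unfold m in *; lra. }
  split; [|split]; auto.
  intros t Ht. destruct (Rlt_or_le t b) as [h|h].
  - pose proof (solOn_eq F1 F2 U a b X Y _ _ HS A) as HH. apply HH. lra.
  - pose proof (solOn_eq F1 F2 U c d X' Y' _ _ HS' B) as HH. apply HH. lra.
Qed.

Lemma LipBox_sub F1 F2 p1 p2 r L M q1 q2 r' :
  LipBox F1 F2 p1 p2 r L M -> Rabs (q1 - p1) + r' <= r -> Rabs (q2 - p2) + r' <= r ->
  LipBox F1 F2 q1 q2 r' L M.
Proof.
  intros [HB HL] E1 E2.
  assert (Hs : forall z1 z2, inbox q1 q2 r' z1 z2 -> inbox p1 p2 r z1 z2).
  { intros z1 z2 [I1 I2]. split.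
    - pose proof (tri3 z1 q1 p1). lra.
    - pose proof (tri3 z2 q2 p2). lra. }
  split.
  - intros z1 z2 Hz. apply HB. auto.
  - intros. apply HL; auto.
Qed.

Lemma local_ext F1 F2 U p1 p2 :
  LocLip F1 F2 U -> U p1 p2 ->
  exists rho h, 0 < rho /\ 0 < h /\ forall q1 q2 t0, Rabs (q1 - p1) <= rho -> Rabs (q2 - p2) <= rho ->
    exists X Y, X t0 = q1 /\ Y t0 = q2 /\ solOn F1 F2 U (t0 - h) (t0 + h) X Y.
Proof.
  intros HLL HU. destruct (HLL _ _ HU) as [r [L [M [Hr [HL [HM [HLB HUb]]]]]]].
  exists (r / 2), (Rmin (r / 2 / (M + 1)) (/ (4 * (L + 1)))).
  assert (Hh : 0 < Rmin (r / 2 / (M + 1)) (/ (4 * (L + 1)))).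
  { apply Rmin_pos; [apply Rdiv_lt_0_compat; lra|apply Rinv_0_lt_compat; lra]. }
  split; [lra|split; auto].
  intros q1 q2 t0 E1 E2.
  set (h := Rmin (r / 2 / (M + 1)) (/ (4 * (L + 1)))) in *.
  assert (HhM : h * M <= r / 2).
  { apply Rle_trans with (r / 2 / (M + 1) * M). apply Rmult_le_compat_r; [lra|apply Rmin_l].
    apply Rmult_le_reg_r with (M + 1); [lra|]. field_simplify; nra. }
  assert (HhL : 4 * h * L <= 1).
  { apply Rle_trans with (4 * / (4 * (L + 1)) * L). apply Rmult_le_compat_r; [lra|]. apply Rmult_le_compat_l; [lra|apply Rmin_r].
    apply Rmult_le_reg_r with (L + 1); [lra|]. field_simplify; lra. }
  assert (HLB' : LipBox F1 F2 q1 q2 (r / 2) L M) by (apply (LipBox_sub F1 F2 p1 p2 r); auto; lra).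
  destruct (picard F1 F2 q1 q2 (r / 2) L M t0 h HLB' HL Hh HM HhM HhL) as [X [Y [EX [EY [Hin Hd]]]]].
  exists X, Y. split; [|split]; auto.
  intros t Ht. destruct (Hd t Ht) as [d1 d2]. split; [|split]; auto.
  apply HUb. destruct (Hin t) as [I1 I2]. split.
  - pose proof (tri3 (X t) q1 p1). lra.
  - pose proof (tri3 (Y t) q2 p2). lra.
Qed.

Lemma patch F1 F2 U p1 p2 (c : nat -> R) :
  LocLip F1 F2 U -> (forall n, 0 < c n) ->
  (forall n, exists X Y, solOn F1 F2 U (- c n) (c n) X Y /\ X 0 = p1 /\ Y 0 = p2) ->
  exists X Y, X 0 = p1 /\ Y 0 = p2 /\ forall t n, Rabs t < c n -> 
     derivable_pt_lim X t (F1 (X t) (Y t)) /\ derivable_pt_lim Y t (F2 (X t) (Y t)) /\ U (X t) (Y t).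
Proof.
  intros HLL Hc Hex.
  assert (Hs : forall n, {XY : (R -> R) * (R -> R) | solOn F1 F2 U (- c n) (c n) (fst XY) (snd XY) /\ fst XY 0 = p1 /\ snd XY 0 = p2}).
  { intros n. apply constructive_indefinite_description. destruct (Hex n) as [X [Y H]]. exists (X, Y). exact H. }
  set (XY := fun n => proj1_sig (Hs n)).
  assert (HXY : forall n, solOn F1 F2 U (- c n) (c n) (fst (XY n)) (snd (XY n)) /\ fst (XY n) 0 = p1 /\ snd (XY n) 0 = p2)
    by (intro n; apply (proj2_sig (Hs n))).
  clearbody XY.
  assert (Hcons : forall n k t, Rabs t < c n -> Rabs t < c k -> fst (XY n) t = fst (XY k) t /\ snd (XY n) t = snd (XY k) t).
  { intros n k t Hn Hk. set (m := Rmin (c n) (c k)).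
    assert (Hm : 0 < m) by (apply Rmin_pos; auto).
    destruct (HXY n) as [Sn [En1 En2]]. destruct (HXY k) as [Sk [Ek1 Ek2]].
    apply (uniq F1 F2 U (- m) m (fst (XY n)) (snd (XY n)) (fst (XY k)) (snd (XY k)) 0); auto.
    - apply (solOn_sub F1 F2 U (- c n) (c n)); auto; [pose proof (Rmin_l (c n) (c k)); unfold m; lra| apply Rmin_l].
    - apply (solOn_sub F1 F2 U (- c k) (c k)); auto; [pose proof (Rmin_r (c n) (c k)); unfold m; lra| apply Rmin_r].
    - lra.
    - congruence.
    - congruence.
    - unfold m. unfold Rmin. destruct Rle_dec; unfold Rabs in *; destruct Rcase_abs; split; lra. }
  set (Nt := fun t => match excluded_middle_informative (exists n, Rabs t < c n) with
                      | left H => proj1_sig (constructive_indefinite_description _ H) | right _ => O end).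
  assert (HNt : forall t n, Rabs t < c n -> Rabs t < c (Nt t)).
  { intros t n Hn. unfold Nt. destruct excluded_middle_informative as [H|H].
    - apply (proj2_sig (constructive_indefinite_description _ H)).
    - exfalso; apply H; exists n; auto. }
  clearbody Nt.
  exists (fun t => fst (XY (Nt t)) t), (fun t => snd (XY (Nt t)) t).
  split; [apply (HXY (Nt 0))|split; [apply (HXY (Nt 0))|]].
  intros t n Ht.
  assert (Hloc : forall u, - c n < u < c n -> fst (XY (Nt u)) u = fst (XY n) u /\ snd (XY (Nt u)) u = snd (XY n) u).
  { intros u Hu. assert (Rabs u < c n) by (unfold Rabs; destruct Rcase_abs; lra).
    apply Hcons; auto. eapply HNt; eauto. }
  pose proof (solOn_eq F1 F2 U (- c n) (c n) (fst (XY n)) (snd (XY n)) _ _ (proj1 (HXY n)) Hloc) as HH.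
  apply HH. unfold Rabs in Ht; destruct Rcase_abs in Ht; split; lra.
Qed.

Lemma lip_time F1 F2 U a b X Y M :
  solOn F1 F2 U a b X Y -> (forall t, a < t < b -> Rabs (F1 (X t) (Y t)) <= M /\ Rabs (F2 (X t) (Y t)) <= M) ->
  forall s t, a < s < b -> a < t < b -> Rabs (X s - X t) <= M * Rabs (s - t) /\ Rabs (Y s - Y t) <= M * Rabs (s - t).
Proof.
  intros HS HM s t Hs Ht.
  assert (Hin : forall c, Rmin t s <= c <= Rmax t s -> a < c < b).
  { intros c Hc. unfold Rmin, Rmax in Hc. destruct Rle_dec in Hc; split; lra. }
  split.
  - destruct (MVT_abs X (fun c => F1 (X c) (Y c)) t s) as [c [Hc1 Hc2]].
    { intros c Hc. apply (HS c (Hin c Hc)). }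
    rewrite Hc1. apply Rmult_le_compat_r; [apply Rabs_pos|]. apply (HM c (Hin c Hc2)).
  - destruct (MVT_abs Y (fun c => F2 (X c) (Y c)) t s) as [c [Hc1 Hc2]].
    { intros c Hc. apply (HS c (Hin c Hc)). }
    rewrite Hc1. apply Rmult_le_compat_r; [apply Rabs_pos|]. apply (HM c (Hin c Hc2)).
Qed.

Lemma half_pow_small K eps : 0 < eps -> exists n, K * (/2)^n <= eps.
Proof.
  intros He. destruct (geom_cv K eps He) as [N HN]. exists N. specialize (HN N (le_n N)).
  unfold R_dist in HN. rewrite Rminus_0_r in HN. pose proof (Rle_abs (K * (/2)^N)). lra.
Qed.

Definition APprop (F1 F2 : R -> R -> R) (U : R -> R -> Prop) p1 p2 :=
  forall T, 0 < T -> exists M (K : R -> R -> Prop), 0 <= M /\ (forall q1 q2, K q1 q2 -> U q1 q2) /\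
    (forall q1 q2, (forall eps, 0 < eps -> exists k1 k2, K k1 k2 /\ Rabs (k1 - q1) <= eps /\ Rabs (k2 - q2) <= eps) -> K q1 q2) /\
    (forall a X Y, 0 < a <= T -> solOn F1 F2 U (-a) a X Y -> X 0 = p1 -> Y 0 = p2 ->
        forall t, -a < t < a -> K (X t) (Y t) /\ Rabs (F1 (X t) (Y t)) <= M /\ Rabs (F2 (X t) (Y t)) <= M).

Lemma half_pow_mono n m : (n <= m)%nat -> (/2)^m <= (/2)^n.
Proof.
  intros H. replace m with (n + (m - n))%nat by lia. generalize (m - n)%nat as k. intros k.
  induction k as [|k IH]. rewrite Nat.add_0_r; lra.
  rewrite Nat.add_succ_r. simpl. assert (0 <= (/2)^(n+k)) by (apply pow_le; lra). lra.
Qed.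

Lemma end_limit (F1 F2 : R -> R -> R) Sg X Y M (K : R -> R -> Prop) :
  0 < Sg -> 0 <= M ->
  (forall s t, -Sg < s < Sg -> -Sg < t < Sg -> Rabs (X s - X t) <= M * Rabs (s - t) /\ Rabs (Y s - Y t) <= M * Rabs (s - t)) ->
  (forall q1 q2, (forall eps, 0 < eps -> exists k1 k2, K k1 k2 /\ Rabs (k1 - q1) <= eps /\ Rabs (k2 - q2) <= eps) -> K q1 q2) ->
  (forall t, -Sg < t < Sg -> K (X t) (Y t) /\ Rabs (F1 (X t) (Y t)) <= M /\ Rabs (F2 (X t) (Y t)) <= M) ->
  exists l1 l2, K l1 l2 /\ forall t, 0 <= t < Sg -> Rabs (X t - l1) <= M * (Sg - t) /\ Rabs (Y t - l2) <= M * (Sg - t).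
Proof.
  intros HS HM Hlip Hcl HK.
  set (c := fun n : nat => Sg - Sg * (/2)^(S n)).
  assert (Hc : forall n, 0 < c n < Sg).
  { intros n. unfold c. assert (0 < (/2)^(S n)) by (apply pow_lt; lra).
    assert ((/2)^(S n) <= /2). { simpl. assert ((/2)^n <= 1) by (replace 1 with ((/2)^0) by (simpl; lra); apply half_pow_mono; lia). nra. }
    split; nra. }
  assert (Hcd : forall n m, (n <= m)%nat -> Rabs (c m - c n) <= Sg * (/2)^n).
  { intros n m Hnm. unfold c.
    assert (0 < (/2)^(S m)) by (apply pow_lt; lra).
    assert ((/2)^(S n) <= (/2)^n) by (apply half_pow_mono; lia).
    assert ((/2)^(S m) <= (/2)^(S n)) by (apply half_pow_mono; lia).
    unfold Rabs; destruct Rcase_abs; nra. }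
  assert (HcS : forall n, Sg - c n <= Sg * (/2)^n).
  { intros n. unfold c. assert ((/2)^(S n) <= (/2)^n) by (apply half_pow_mono; lia). nra. }
  assert (Hcin : forall n, -Sg < c n < Sg) by (intro n; destruct (Hc n); split; lra).
  destruct (cauchy_limit (fun n => X (c n)) (fun n => (M * Sg) * (/2)^n)) as [l1 Hl1].
  { apply geom_cv. }
  { intros n m Hnm. destruct (Hlip (c m) (c n) (Hcin m) (Hcin n)) as [A _].
    pose proof (Hcd n m Hnm). rewrite Rmult_assoc. eapply Rle_trans; [apply A|]. apply Rmult_le_compat_l; auto. }
  destruct (cauchy_limit (fun n => Y (c n)) (fun n => (M * Sg) * (/2)^n)) as [l2 Hl2].
  { apply geom_cv. }
  { intros n m Hnm. destruct (Hlip (c m) (c n) (Hcin m) (Hcin n)) as [_ A].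
    pose proof (Hcd n m Hnm). rewrite Rmult_assoc. eapply Rle_trans; [apply A|]. apply Rmult_le_compat_l; auto. }
  exists l1, l2. split.
  - apply Hcl. intros eps Heps. destruct (half_pow_small (M * Sg) eps Heps) as [n Hn].
    exists (X (c n)), (Y (c n)). split; [apply (HK (c n) (Hcin n))|].
    pose proof (Hl1 n) as B1. pose proof (Hl2 n) as B2. cbv beta in B1, B2. rewrite Rabs_minus_sym in B1, B2. split; lra.
  - intros t Ht. assert (Htin : -Sg < t < Sg) by lra. split.
    + apply (le_geom _ _ (2 * (M * Sg))). intros n.
      destruct (Hlip t (c n) Htin (Hcin n)) as [A _]. pose proof (Hl1 n) as B. simpl in B.
      pose proof (tri3 (X t) (X (c n)) l1). rewrite Rabs_minus_sym in B.
      assert (Rabs (t - c n) <= (Sg - t) + Sg * (/2)^n).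
      { pose proof (HcS n). destruct (Hc n). unfold Rabs; destruct Rcase_abs; lra. }
      assert (M * Rabs (t - c n) <= M * ((Sg - t) + Sg * (/2)^n)) by (apply Rmult_le_compat_l; auto).
      lra.
    + apply (le_geom _ _ (2 * (M * Sg))). intros n.
      destruct (Hlip t (c n) Htin (Hcin n)) as [_ A]. pose proof (Hl2 n) as B. simpl in B.
      pose proof (tri3 (Y t) (Y (c n)) l2). rewrite Rabs_minus_sym in B.
      assert (Rabs (t - c n) <= (Sg - t) + Sg * (/2)^n).
      { pose proof (HcS n). destruct (Hc n). unfold Rabs; destruct Rcase_abs; lra. }
      assert (M * Rabs (t - c n) <= M * ((Sg - t) + Sg * (/2)^n)) by (apply Rmult_le_compat_l; auto).
      lra.
Qed.

Lemma global_T F1 F2 U p1 p2 :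
  LocLip F1 F2 U -> U p1 p2 -> APprop F1 F2 U p1 p2 ->
  forall T, 0 < T -> exists X Y, solOn F1 F2 U (-T) T X Y /\ X 0 = p1 /\ Y 0 = p2.
Proof.
  intros HLL HU AP T HT.
  set (A := fun a => 0 < a <= T /\ exists X Y, solOn F1 F2 U (-a) a X Y /\ X 0 = p1 /\ Y 0 = p2).
  destruct (local_ext F1 F2 U p1 p2 HLL HU) as [rho0 [h0 [Hrho0 [Hh0 Hext0]]]].
  assert (HA0 : A (Rmin h0 T)).
  { split. split; [apply Rmin_pos; auto|apply Rmin_r].
    destruct (Hext0 p1 p2 0) as [X [Y [E1 [E2 HS]]]]; try (rewrite Rminus_diag, Rabs_R0; lra).
    exists X, Y. split; auto. apply (solOn_sub F1 F2 U (0 - h0) (0 + h0)); auto.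
    pose proof (Rmin_l h0 T); lra. pose proof (Rmin_l h0 T); lra. }
  assert (Hb : bound A) by (exists T; intros a [[_ Ha] _]; auto).
  destruct (completeness A Hb (ex_intro _ _ HA0)) as [Sg [Hub Hlub]].
  assert (HSpos : 0 < Sg). { pose proof (Hub _ HA0). pose proof (Rmin_pos h0 T Hh0 HT). lra. }
  assert (HST : Sg <= T) by (apply Hlub; intros a [[_ Ha] _]; auto).
  assert (Hsol : exists X Y, solOn F1 F2 U (-Sg) Sg X Y /\ X 0 = p1 /\ Y 0 = p2).
  { set (c := fun n : nat => Sg - Sg * (/2)^(S n)).
    assert (Hc : forall n, 0 < c n < Sg).
    { intros n. unfold c. assert (0 < (/2)^(S n)) by (apply pow_lt; lra).
      assert ((/2)^(S n) <= /2). { replace (/2) with ((/2)^1) at 2 by (simpl; lra). apply half_pow_mono; lia. }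
      split; nra. }
    destruct (patch F1 F2 U p1 p2 c HLL) as [X [Y [E1 [E2 HX]]]].
    - intros n; apply Hc.
    - intros n. destruct (classic (exists a, A a /\ c n < a)) as [[a [[Ha [X [Y [HS [E1 E2]]]]] Hca]]|Hno].
      + exists X, Y. split; [|auto]. apply (solOn_sub F1 F2 U (-a) a); auto; destruct (Hc n); lra.
      + exfalso. assert (Sg <= c n). { apply Hlub. intros a Ha. destruct (Rle_or_lt a (c n)); auto. exfalso; apply Hno; exists a; auto. }
        destruct (Hc n); lra.
    - exists X, Y. split; [|split]; auto. intros t Ht.
      assert (Hpos : 0 < Sg - Rabs t) by (unfold Rabs; destruct Rcase_abs; lra).
      destruct (half_pow_small Sg (Sg - Rabs t) Hpos) as [n Hn].
      apply (HX t n). unfold c. assert ((/2)^(S n) < (/2)^n). { simpl. assert (0 < (/2)^n) by (apply pow_lt; lra). lra. }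
      nra. }
  destruct (Rle_lt_or_eq_dec Sg T HST) as [Hlt|Heq]; [|subst Sg; auto].
  exfalso.
  destruct Hsol as [X [Y [HS [E1 E2]]]].
  destruct (AP T HT) as [M [K [HM [HKU [Hcl HK]]]]].
  pose proof (HK Sg X Y ltac:(lra) HS E1 E2) as HKX.
  pose proof (lip_time F1 F2 U (-Sg) Sg X Y M HS (fun t Ht => proj2 (HKX t Ht))) as Hlip.
  destruct (end_limit F1 F2 Sg X Y M K HSpos HM Hlip Hcl HKX) as [l1 [l2 [Kl Hl]]].
  destruct (end_limit F1 F2 Sg (fun t => X (- t)) (fun t => Y (- t)) M K HSpos HM) as [m1 [m2 [Km Hm]]].
  { intros s t Hs Ht. replace (s - t) with (- (- s - - t)) by ring. rewrite Rabs_Ropp. apply Hlip; lra. }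
  { auto. }
  { intros t Ht. apply HKX. lra. }
  destruct (local_ext F1 F2 U l1 l2 HLL (HKU _ _ Kl)) as [rho1 [h1 [Hrho1 [Hh1 Hext1]]]].
  destruct (local_ext F1 F2 U m1 m2 HLL (HKU _ _ Km)) as [rho2 [h2 [Hrho2 [Hh2 Hext2]]]].
  destruct (min2 (Sg / 2) (rho1 / (M + 1)) ltac:(lra) ltac:(apply Rdiv_lt_0_compat; lra)) as [e1 [He1 [He1a He1b]]].
  destruct (min2 (rho2 / (M + 1)) (h1 / 2) ltac:(apply Rdiv_lt_0_compat; lra) ltac:(lra)) as [e2 [He2 [He2a He2b]]].
  destruct (min2 e1 e2 He1 He2) as [e3 [He3 [He3a He3b]]].
  destruct (min2 e3 (h2 / 2) He3 ltac:(lra)) as [eta [Heta [Hetaa Hetab]]].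
  assert (HMe1 : M * eta <= rho1).
  { apply Rle_trans with (M * (rho1 / (M + 1))). apply Rmult_le_compat_l; lra.
    apply Rmult_le_reg_r with (M + 1); [lra|]. field_simplify; nra. }
  assert (HMe2 : M * eta <= rho2).
  { apply Rle_trans with (M * (rho2 / (M + 1))). apply Rmult_le_compat_l; lra.
    apply Rmult_le_reg_r with (M + 1); [lra|]. field_simplify; nra. }
  set (t1 := Sg - eta).
  assert (Ht1 : 0 < t1 < Sg) by (unfold t1; split; lra).
  destruct (Hl t1 ltac:(lra)) as [Dr1 Dr2].
  replace (Sg - t1) with eta in Dr1, Dr2 by (unfold t1; ring).
  destruct (Hext1 (X t1) (Y t1) t1 ltac:(lra) ltac:(lra)) as [Z1 [V1 [F1e [F2e HS1]]]].
  destruct (glue F1 F2 U (-Sg) Sg (t1 - eta) (t1 + h1) X Y Z1 V1) as [W1 [Q1 [HW1 [HW1a HW1b]]]].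
  { auto. }
  { apply (solOn_sub F1 F2 U (t1 - h1) (t1 + h1)); auto; lra. }
  { unfold t1; lra. } { unfold t1; lra. } { unfold t1; lra. }
  { intros t Ht. apply (uniq F1 F2 U (t1 - eta) Sg X Y Z1 V1 t1); auto.
    - apply (solOn_sub F1 F2 U (-Sg) Sg); auto; unfold t1; lra.
    - apply (solOn_sub F1 F2 U (t1 - h1) (t1 + h1)); auto; unfold t1; lra.
    - lra. }
  destruct (Hm t1 ltac:(lra)) as [Dl1 Dl2].
  replace (Sg - t1) with eta in Dl1, Dl2 by (unfold t1; ring).
  destruct (Hext2 (X (- t1)) (Y (- t1)) (- t1) ltac:(lra) ltac:(lra)) as [Z2 [V2 [G1e [G2e HS2]]]].
  destruct (glue F1 F2 U (- t1 - h2) (- t1 + eta) (-Sg) (t1 + h1) Z2 V2 W1 Q1) as [W [Q [HW [HWa HWb]]]].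
  { apply (solOn_sub F1 F2 U (- t1 - h2) (- t1 + h2)); auto; lra. }
  { auto. }
  { unfold t1; lra. } { unfold t1; lra. } { unfold t1; lra. }
  { intros t Ht. apply (uniq F1 F2 U (-Sg) (- t1 + eta) Z2 V2 W1 Q1 (- t1)); auto.
    - apply (solOn_sub F1 F2 U (- t1 - h2) (- t1 + h2)); auto; unfold t1; lra.
    - apply (solOn_sub F1 F2 U (-Sg) (t1 + h1)); auto; unfold t1; lra.
    - unfold t1; lra.
    - destruct (HW1a (- t1) ltac:(lra)) as [A1 _]. rewrite A1; auto.
    - destruct (HW1a (- t1) ltac:(lra)) as [_ A1]. rewrite A1; auto. }
  set (a' := Rmin (Sg + eta) T).
  assert (Ha' : A a').
  { split. split; [unfold a'; apply Rmin_pos; lra|apply Rmin_r].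
    exists W, Q. split; [|split].
    - apply (solOn_sub F1 F2 U (- t1 - h2) (t1 + h1)); auto; unfold a', t1; pose proof (Rmin_l (Sg + eta) T); lra.
    - destruct (HWb 0 ltac:(lra)) as [A1 _]. rewrite A1. destruct (HW1a 0 ltac:(lra)) as [A2 _]. rewrite A2; auto.
    - destruct (HWb 0 ltac:(lra)) as [_ A1]. rewrite A1. destruct (HW1a 0 ltac:(lra)) as [_ A2]. rewrite A2; auto. }
  pose proof (Hub _ Ha'). unfold a' in H. unfold Rmin in H. destruct Rle_dec in H; lra.
Qed.

Lemma global_sol F1 F2 U p1 p2 :
  LocLip F1 F2 U -> U p1 p2 -> APprop F1 F2 U p1 p2 ->
  exists X Y, X 0 = p1 /\ Y 0 = p2 /\ forall t,
     derivable_pt_lim X t (F1 (X t) (Y t)) /\ derivable_pt_lim Y t (F2 (X t) (Y t)) /\ U (X t) (Y t).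
Proof.
  intros HLL HU AP.
  destruct (patch F1 F2 U p1 p2 (fun n => INR n + 1) HLL) as [X [Y [E1 [E2 H]]]].
  - intros n. pose proof (pos_INR n). lra.
  - intros n. apply (global_T F1 F2 U p1 p2 HLL HU AP). pose proof (pos_INR n). lra.
  - exists X, Y. split; [|split]; auto. intros t.
    destruct (INR_unbounded (Rabs t)) as [n Hn]. apply (H t n). lra.
Qed.

Lemma global_uniq F1 F2 U X Y X' Y' :
  LocLip F1 F2 U -> (forall t, derivable_pt_lim X t (F1 (X t) (Y t)) /\ derivable_pt_lim Y t (F2 (X t) (Y t)) /\ U (X t) (Y t)) ->
  (forall t, derivable_pt_lim X' t (F1 (X' t) (Y' t)) /\ derivable_pt_lim Y' t (F2 (X' t) (Y' t)) /\ U (X' t) (Y' t)) ->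
  X 0 = X' 0 -> Y 0 = Y' 0 -> forall t, X t = X' t /\ Y t = Y' t.
Proof.
  intros HLL H H' E1 E2 t.
  apply (uniq F1 F2 U (- (Rabs t + 1)) (Rabs t + 1) X Y X' Y' 0); auto.
  - intros s _; auto.
  - intros s _; auto.
  - pose proof (Rabs_pos t); lra.
  - unfold Rabs; destruct Rcase_abs; lra.
Qed.

Lemma comp_continuity F1 F2 U X Y t :
  LocLip F1 F2 U -> derivable_pt_lim X t (F1 (X t) (Y t)) -> derivable_pt_lim Y t (F2 (X t) (Y t)) -> U (X t) (Y t) ->
  continuity_pt (fun s => F1 (X s) (Y s)) t /\ continuity_pt (fun s => F2 (X s) (Y s)) t.
Proof.
  intros HLL dX dY HU.
  destruct (HLL _ _ HU) as [r [L [M [Hr [HL [HM [[_ HLip] _]]]]]]].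
  assert (Key : forall eps, 0 < eps -> exists del, 0 < del /\ forall s, Rabs (s - t) < del ->
            Rabs (F1 (X s) (Y s) - F1 (X t) (Y t)) < eps /\ Rabs (F2 (X s) (Y s) - F2 (X t) (Y t)) < eps).
  { intros eps Heps.
    assert (He : 0 < Rmin r (eps / (2 * (L + 1)))) by (apply Rmin_pos; [lra|apply Rdiv_lt_0_compat; lra]).
    destruct (cont_eps _ _ _ dX _ He) as [d1 [Hd1 C1]]. destruct (cont_eps _ _ _ dY _ He) as [d2 [Hd2 C2]].
    destruct (min2 _ _ Hd1 Hd2) as [del [Hdel [Ha Hb]]]. exists del. split; auto.
    intros s Hs. specialize (C1 s ltac:(lra)). specialize (C2 s ltac:(lra)).
    pose proof (Rmin_l r (eps / (2 * (L + 1)))). pose proof (Rmin_r r (eps / (2 * (L + 1)))).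
    assert (I1 : inbox (X t) (Y t) r (X s) (Y s)) by (split; lra).
    assert (I2 : inbox (X t) (Y t) r (X t) (Y t)) by (split; rewrite Rminus_diag, Rabs_R0; lra).
    destruct (HLip _ _ _ _ I1 I2) as [B1 B2].
    assert (L * (Rabs (X s - X t) + Rabs (Y s - Y t)) <= L * (2 * (eps / (2 * (L + 1))))) by (apply Rmult_le_compat_l; lra).
    assert (L * (2 * (eps / (2 * (L + 1)))) < eps).
    { apply Rmult_lt_reg_r with (L + 1); [lra|]. field_simplify; lra. }
    split; lra. }
  split; intros eps Heps; destruct (Key eps Heps) as [del [Hdel Hk]]; exists del; split; auto;
    intros s [_ Hs]; apply Hk; auto.
Qed.

Definition LLat (f : R -> R -> R) p1 p2 :=
  exists r L, 0 < r /\ 0 <= L /\ forall q1 q2 q1' q2', inbox p1 p2 r q1 q2 -> inbox p1 p2 r q1' q2' ->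
    Rabs (f q1 q2 - f q1' q2') <= L * (Rabs (q1 - q1') + Rabs (q2 - q2')).

Lemma inbox_mono p1 p2 r r' q1 q2 : r' <= r -> inbox p1 p2 r' q1 q2 -> inbox p1 p2 r q1 q2.
Proof. intros H [A B]; split; lra. Qed.

Lemma inbox_center p1 p2 r : 0 <= r -> inbox p1 p2 r p1 p2.
Proof. intros; split; rewrite Rminus_diag, Rabs_R0; lra. Qed.

Lemma LLat_shrink f p1 p2 : LLat f p1 p2 -> forall r0, 0 < r0 -> exists r L, 0 < r /\ r <= r0 /\ 0 <= L /\
  forall q1 q2 q1' q2', inbox p1 p2 r q1 q2 -> inbox p1 p2 r q1' q2' ->
    Rabs (f q1 q2 - f q1' q2') <= L * (Rabs (q1 - q1') + Rabs (q2 - q2')).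
Proof.
  intros [r [L [Hr [HL H]]]] r0 Hr0. exists (Rmin r r0), L. split; [apply Rmin_pos; auto|].
  split; [apply Rmin_r|]. split; auto. intros. apply H; eapply inbox_mono; eauto; apply Rmin_l.
Qed.

Lemma LLat_bound f p1 p2 r L : 0 <= L -> (forall q1 q2 q1' q2', inbox p1 p2 r q1 q2 -> inbox p1 p2 r q1' q2' ->
    Rabs (f q1 q2 - f q1' q2') <= L * (Rabs (q1 - q1') + Rabs (q2 - q2'))) -> 0 <= r ->
  forall q1 q2, inbox p1 p2 r q1 q2 -> Rabs (f q1 q2) <= Rabs (f p1 p2) + L * (2 * r).
Proof.
  intros HL H Hr q1 q2 Hq. pose proof (H _ _ _ _ Hq (inbox_center p1 p2 r Hr)).
  destruct Hq as [A B]. pose proof (tri3 (f q1 q2) (f p1 p2) 0). rewrite !Rminus_0_r in H1.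
  assert (L * (Rabs (q1 - p1) + Rabs (q2 - p2)) <= L * (2 * r)) by (apply Rmult_le_compat_l; lra). lra.
Qed.

Lemma LLat_const c p1 p2 : LLat (fun _ _ => c) p1 p2.
Proof.
  exists 1, 0. split; [lra|split; [lra|]]. intros. rewrite Rminus_diag, Rabs_R0. lra.
Qed.

Lemma LLat_fst p1 p2 : LLat (fun a _ => a) p1 p2.
Proof. exists 1, 1. split; [lra|split; [lra|]]. intros. pose proof (Rabs_pos (q2 - q2')). lra. Qed.

Lemma LLat_snd p1 p2 : LLat (fun _ b => b) p1 p2.
Proof. exists 1, 1. split; [lra|split; [lra|]]. intros. pose proof (Rabs_pos (q1 - q1')). lra. Qed.

Lemma LLat_plus f g p1 p2 : LLat f p1 p2 -> LLat g p1 p2 -> LLat (fun a b => f a b + g a b) p1 p2.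
Proof.
  intros [r1 [L1 [Hr1 [HL1 H1]]]] [r2 [L2 [Hr2 [HL2 H2]]]].
  exists (Rmin r1 r2), (L1 + L2). split; [apply Rmin_pos; auto|split; [lra|]].
  intros q1 q2 q1' q2' Hq Hq'.
  pose proof (H1 q1 q2 q1' q2' (inbox_mono _ _ _ _ _ _ (Rmin_l r1 r2) Hq) (inbox_mono _ _ _ _ _ _ (Rmin_l r1 r2) Hq')).
  pose proof (H2 q1 q2 q1' q2' (inbox_mono _ _ _ _ _ _ (Rmin_r r1 r2) Hq) (inbox_mono _ _ _ _ _ _ (Rmin_r r1 r2) Hq')).
  replace (f q1 q2 + g q1 q2 - (f q1' q2' + g q1' q2')) with ((f q1 q2 - f q1' q2') + (g q1 q2 - g q1' q2')) by ring.
  pose proof (Rabs_triang (f q1 q2 - f q1' q2') (g q1 q2 - g q1' q2')). lra.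
Qed.

Lemma LLat_opp f p1 p2 : LLat f p1 p2 -> LLat (fun a b => - f a b) p1 p2.
Proof.
  intros [r [L [Hr [HL H]]]]. exists r, L. split; auto. split; auto. intros.
  replace (- f q1 q2 - - f q1' q2') with (- (f q1 q2 - f q1' q2')) by ring. rewrite Rabs_Ropp. auto.
Qed.

Lemma LLat_minus f g p1 p2 : LLat f p1 p2 -> LLat g p1 p2 -> LLat (fun a b => f a b - g a b) p1 p2.
Proof. intros. unfold Rminus. apply (LLat_plus f (fun a b => - g a b)); auto. apply LLat_opp; auto. Qed.

Lemma LLat_mult f g p1 p2 : LLat f p1 p2 -> LLat g p1 p2 -> LLat (fun a b => f a b * g a b) p1 p2.
Proof.
  intros [r1 [L1 [Hr1 [HL1 H1]]]] [r2 [L2 [Hr2 [HL2 H2]]]].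
  set (r := Rmin r1 r2). assert (Hr : 0 < r) by (apply Rmin_pos; auto).
  assert (H1' : forall q1 q2 q1' q2', inbox p1 p2 r q1 q2 -> inbox p1 p2 r q1' q2' ->
    Rabs (f q1 q2 - f q1' q2') <= L1 * (Rabs (q1 - q1') + Rabs (q2 - q2'))).
  { intros. apply H1; eapply inbox_mono; eauto; apply Rmin_l. }
  assert (H2' : forall q1 q2 q1' q2', inbox p1 p2 r q1 q2 -> inbox p1 p2 r q1' q2' ->
    Rabs (g q1 q2 - g q1' q2') <= L2 * (Rabs (q1 - q1') + Rabs (q2 - q2'))).
  { intros. apply H2; eapply inbox_mono; eauto; apply Rmin_r. }
  pose proof (LLat_bound f p1 p2 r L1 HL1 H1' ltac:(lra)) as Bf.
  pose proof (LLat_bound g p1 p2 r L2 HL2 H2' ltac:(lra)) as Bg.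
  set (Mf := Rabs (f p1 p2) + L1 * (2 * r)) in *. set (Mg := Rabs (g p1 p2) + L2 * (2 * r)) in *.
  assert (HMf : 0 <= Mf) by (unfold Mf; pose proof (Rabs_pos (f p1 p2)); nra).
  assert (HMg : 0 <= Mg) by (unfold Mg; pose proof (Rabs_pos (g p1 p2)); nra).
  exists r, (Mf * L2 + Mg * L1). split; auto. split; [nra|].
  intros q1 q2 q1' q2' Hq Hq'.
  replace (f q1 q2 * g q1 q2 - f q1' q2' * g q1' q2') with (f q1 q2 * (g q1 q2 - g q1' q2') + g q1' q2' * (f q1 q2 - f q1' q2')) by ring.
  eapply Rle_trans; [apply Rabs_triang|]. rewrite !Rabs_mult.
  pose proof (Bf _ _ Hq). pose proof (Bg _ _ Hq'). pose proof (H1' _ _ _ _ Hq Hq'). pose proof (H2' _ _ _ _ Hq Hq').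
  set (D := Rabs (q1 - q1') + Rabs (q2 - q2')) in *.
  assert (Rabs (f q1 q2) * Rabs (g q1 q2 - g q1' q2') <= Mf * (L2 * D)) by (apply Rmult_le_compat; auto using Rabs_pos).
  assert (Rabs (g q1' q2') * Rabs (f q1 q2 - f q1' q2') <= Mg * (L1 * D)) by (apply Rmult_le_compat; auto using Rabs_pos).
  nra.
Qed.

Definition Lip1 (g : R -> R) x := exists rho K, 0 < rho /\ 0 <= K /\
  forall a b, Rabs (a - x) <= rho -> Rabs (b - x) <= rho -> Rabs (g a - g b) <= K * Rabs (a - b).

Lemma LLat_comp g f p1 p2 : LLat f p1 p2 -> Lip1 g (f p1 p2) -> LLat (fun a b => g (f a b)) p1 p2.
Proof.
  intros [r [L [Hr [HL H]]]] [rho [K [Hrho [HK Hg]]]].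
  set (r' := Rmin r (rho / (2 * (L + 1)))).
  assert (Hr' : 0 < r') by (apply Rmin_pos; [auto|apply Rdiv_lt_0_compat; lra]).
  exists r', (K * L). split; auto. split; [nra|].
  assert (Hnear : forall q1 q2, inbox p1 p2 r' q1 q2 -> Rabs (f q1 q2 - f p1 p2) <= rho).
  { intros q1 q2 Hq. assert (Hq0 : inbox p1 p2 r q1 q2) by (eapply inbox_mono; eauto; apply Rmin_l).
    pose proof (H _ _ _ _ Hq0 (inbox_center p1 p2 r ltac:(lra))). destruct Hq as [A B].
    pose proof (Rmin_r r (rho / (2 * (L + 1)))). fold r' in H1.
    assert (L * (Rabs (q1 - p1) + Rabs (q2 - p2)) <= L * (2 * (rho / (2 * (L + 1))))) by (apply Rmult_le_compat_l; lra).
    assert (L * (2 * (rho / (2 * (L + 1)))) <= rho).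
    { apply Rmult_le_reg_r with (L + 1); [lra|]. field_simplify; lra. }
    lra. }
  intros q1 q2 q1' q2' Hq Hq'.
  eapply Rle_trans; [apply Hg; [apply Hnear; auto|apply Hnear; auto]|].
  rewrite Rmult_assoc. apply Rmult_le_compat_l; auto. apply H; eapply inbox_mono; eauto; apply Rmin_l.
Qed.

Lemma Lip1_deriv g g' x rho K : 0 < rho -> 0 <= K ->
  (forall c, Rabs (c - x) <= rho -> derivable_pt_lim g c (g' c) /\ Rabs (g' c) <= K) -> Lip1 g x.
Proof.
  intros Hr HK H. exists rho, K. split; auto. split; auto. intros a b Ha Hb.
  destruct (MVT_abs g g' b a) as [c [Hc1 Hc2]].
  { intros c Hc. apply H. unfold Rmin, Rmax in Hc; destruct Rle_dec in Hc;
    unfold Rabs in *; repeat destruct Rcase_abs; lra. }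
  rewrite Hc1. apply Rmult_le_compat_r; [apply Rabs_pos|]. apply H.
  unfold Rmin, Rmax in Hc2; destruct Rle_dec in Hc2; unfold Rabs in *; repeat destruct Rcase_abs; lra.
Qed.

Lemma Lip1_exp x : Lip1 exp x.
Proof.
  apply (Lip1_deriv exp exp x 1 (exp (x + 1))); [lra|left; apply exp_pos|].
  intros c Hc. split; [apply derivable_pt_lim_exp|]. rewrite Rabs_pos_eq by (left; apply exp_pos).
  destruct (Rle_lt_or_eq_dec c (x + 1)) as [h|h]; [unfold Rabs in Hc; destruct Rcase_abs in Hc; lra| |].
  left; apply exp_increasing; auto. subst; lra.
Qed.

Lemma Lip1_sqrt x : 0 < x -> Lip1 sqrt x.
Proof.
  intros Hx. apply (Lip1_deriv sqrt (fun c => / (2 * sqrt c)) x (x / 2) (/ (2 * sqrt (x / 2)))); [lra| |].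
  { left; apply Rinv_0_lt_compat. assert (0 < sqrt (x / 2)) by (apply sqrt_lt_R0; lra). lra. }
  intros c Hc. assert (Hc0 : x / 2 <= c) by (unfold Rabs in Hc; destruct Rcase_abs in Hc; lra).
  split; [apply derivable_pt_lim_sqrt; lra|].
  assert (0 < sqrt (x / 2)) by (apply sqrt_lt_R0; lra).
  assert (sqrt (x / 2) <= sqrt c) by (apply sqrt_le_1_alt; auto).
  rewrite Rabs_pos_eq by (left; apply Rinv_0_lt_compat; lra).
  apply Rinv_le_contravar; lra.
Qed.

Lemma Lip1_inv x : x <> 0 -> Lip1 Rinv x.
Proof.
  intros Hx. assert (Hax : 0 < Rabs x) by (apply Rabs_pos_lt; auto).
  exists (Rabs x / 2), (/ ((Rabs x / 2) * (Rabs x / 2))). split; [lra|]. split.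
  { left; apply Rinv_0_lt_compat. nra. }
  intros a b Ha Hb.
  assert (Ha0 : Rabs x / 2 <= Rabs a).
  { pose proof (tri3 x a 0). rewrite !Rminus_0_r in H. rewrite Rabs_minus_sym in Ha. lra. }
  assert (Hb0 : Rabs x / 2 <= Rabs b).
  { pose proof (tri3 x b 0). rewrite !Rminus_0_r in H. rewrite Rabs_minus_sym in Hb. lra. }
  assert (Ha1 : a <> 0) by (intro; subst; rewrite Rabs_R0 in Ha0; lra).
  assert (Hb1 : b <> 0) by (intro; subst; rewrite Rabs_R0 in Hb0; lra).
  replace (/ a - / b) with ((b - a) * / (a * b)) by (field; auto).
  rewrite Rabs_mult, Rabs_minus_sym, Rmult_comm. apply Rmult_le_compat_r; [apply Rabs_pos|].
  rewrite Rabs_inv, Rabs_mult. apply Rinv_le_contravar. nra. apply Rmult_le_compat; lra.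
Qed.

Lemma LLat_inv f p1 p2 : LLat f p1 p2 -> f p1 p2 <> 0 -> LLat (fun a b => / f a b) p1 p2.
Proof. intros. apply (LLat_comp Rinv f); auto. apply Lip1_inv; auto. Qed.

Lemma LLat_div f g p1 p2 : LLat f p1 p2 -> LLat g p1 p2 -> g p1 p2 <> 0 -> LLat (fun a b => f a b / g a b) p1 p2.
Proof. intros. unfold Rdiv. apply (LLat_mult f (fun a b => / g a b)); auto. apply LLat_inv; auto. Qed.

Lemma LLat_pow f p1 p2 n : LLat f p1 p2 -> LLat (fun a b => f a b ^ n) p1 p2.
Proof.
  intros H. induction n as [|n IH]. change (LLat (fun _ _ => 1) p1 p2). apply LLat_const.
  simpl. apply (LLat_mult f (fun a b => f a b ^ n)); auto.
Qed.

Lemma LLat_sqrt f p1 p2 : LLat f p1 p2 -> 0 < f p1 p2 -> LLat (fun a b => sqrt (f a b)) p1 p2.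
Proof. intros. apply (LLat_comp sqrt f); auto. apply Lip1_sqrt; auto. Qed.

Lemma LLat_exp f p1 p2 : LLat f p1 p2 -> LLat (fun a b => exp (f a b)) p1 p2.
Proof. intros. apply (LLat_comp exp f); auto. apply Lip1_exp. Qed.

Lemma LLat_cosh p1 p2 : LLat (fun a _ => cosh a) p1 p2.
Proof.
  unfold cosh. apply (LLat_div (fun a _ => exp a + exp (- a)) (fun _ _ => 2)); [| apply LLat_const | lra].
  apply (LLat_plus (fun a _ => exp a) (fun a _ => exp (- a))).
  apply (LLat_exp (fun a _ => a)). apply LLat_fst.
  apply (LLat_exp (fun a _ => - a)). apply (LLat_opp (fun a _ => a)). apply LLat_fst.
Qed.

Lemma LLat_sinh p1 p2 : LLat (fun a _ => sinh a) p1 p2.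
Proof.
  unfold sinh. apply (LLat_div (fun a _ => exp a - exp (- a)) (fun _ _ => 2)); [| apply LLat_const | lra].
  apply (LLat_minus (fun a _ => exp a) (fun a _ => exp (- a))).
  apply (LLat_exp (fun a _ => a)). apply LLat_fst.
  apply (LLat_exp (fun a _ => - a)). apply (LLat_opp (fun a _ => a)). apply LLat_fst.
Qed.

Lemma LocLip_of F1 F2 (U : R -> R -> Prop) :
  (forall p1 p2, U p1 p2 -> LLat F1 p1 p2 /\ LLat F2 p1 p2 /\ exists r, 0 < r /\ forall q1 q2, inbox p1 p2 r q1 q2 -> U q1 q2) ->
  LocLip F1 F2 U.
Proof.
  intros H p1 p2 Hp. destruct (H p1 p2 Hp) as [[r1 [L1 [Hr1 [HL1 H1]]]] [[r2 [L2 [Hr2 [HL2 H2]]]] [r3 [Hr3 H3]]]].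
  set (r := Rmin (Rmin r1 r2) r3).
  assert (Hr : 0 < r) by (unfold r; repeat apply Rmin_pos; auto).
  assert (Hr1' : r <= r1) by (unfold r; eapply Rle_trans; [apply Rmin_l|apply Rmin_l]).
  assert (Hr2' : r <= r2) by (unfold r; eapply Rle_trans; [apply Rmin_l|apply Rmin_r]).
  assert (Hr3' : r <= r3) by (unfold r; apply Rmin_r).
  assert (H1' : forall q1 q2 q1' q2', inbox p1 p2 r q1 q2 -> inbox p1 p2 r q1' q2' ->
    Rabs (F1 q1 q2 - F1 q1' q2') <= L1 * (Rabs (q1 - q1') + Rabs (q2 - q2'))).
  { intros. apply H1; eapply inbox_mono; eauto. }
  assert (H2' : forall q1 q2 q1' q2', inbox p1 p2 r q1 q2 -> inbox p1 p2 r q1' q2' ->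
    Rabs (F2 q1 q2 - F2 q1' q2') <= L2 * (Rabs (q1 - q1') + Rabs (q2 - q2'))).
  { intros. apply H2; eapply inbox_mono; eauto. }
  pose proof (LLat_bound F1 p1 p2 r L1 HL1 H1' ltac:(lra)) as B1.
  pose proof (LLat_bound F2 p1 p2 r L2 HL2 H2' ltac:(lra)) as B2.
  exists r, (L1 + L2), (Rabs (F1 p1 p2) + L1 * (2 * r) + (Rabs (F2 p1 p2) + L2 * (2 * r))).
  pose proof (Rabs_pos (F1 p1 p2)). pose proof (Rabs_pos (F2 p1 p2)).
  split; auto. split; [lra|]. split; [nra|]. split.
  - split.
    + intros q1 q2 Hq. pose proof (B1 _ _ Hq). pose proof (B2 _ _ Hq). split; nra.
    + intros q1 q2 q1' q2' Hq Hq'. pose proof (H1' _ _ _ _ Hq Hq'). pose proof (H2' _ _ _ _ Hq Hq').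
      pose proof (Rabs_pos (q1 - q1')). pose proof (Rabs_pos (q2 - q2')). split; nra.
  - intros. apply H3. eapply inbox_mono; eauto.
Qed.

Definition kk gamma th := cosh th - sqrt gamma * sinh th.

Lemma kk_exp gamma th : kk gamma th = ((1 - sqrt gamma) * exp th + (1 + sqrt gamma) * exp (- th)) / 2.
Proof. unfold kk, cosh, sinh. field. Qed.

Lemma sg_gt1 gamma : 1 < gamma -> 1 < sqrt gamma.
Proof. intros H. rewrite <- sqrt_1. apply sqrt_lt_1_alt. lra. Qed.

Lemma sg_sq gamma : 1 < gamma -> sqrt gamma * sqrt gamma = gamma.
Proof. intros. apply sqrt_sqrt. lra. Qed.

Lemma kk_decr gamma a b : 1 < gamma -> a < b -> kk gamma b < kk gamma a.
Proof.
  intros Hg Hab. rewrite !kk_exp. pose proof (sg_gt1 gamma Hg).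
  assert (exp a < exp b) by (apply exp_increasing; auto).
  assert (exp (- b) < exp (- a)) by (apply exp_increasing; lra).
  nra.
Qed.

Lemma exp_theta_gamma gamma : 1 < gamma ->
  exp (theta_gamma gamma) * exp (theta_gamma gamma) = (sqrt gamma + 1) / (sqrt gamma - 1).
Proof.
  intros Hg. pose proof (sg_gt1 gamma Hg).
  rewrite <- exp_plus. unfold theta_gamma, artanh.
  replace (/ 2 * ln ((1 + / sqrt gamma) / (1 - / sqrt gamma)) + / 2 * ln ((1 + / sqrt gamma) / (1 - / sqrt gamma)))
    with (ln ((1 + / sqrt gamma) / (1 - / sqrt gamma))) by field.
  rewrite exp_ln. field. lra.
  assert (0 < / sqrt gamma < 1). { split. apply Rinv_0_lt_compat; lra. rewrite <- Rinv_1. apply Rinv_lt_contravar; lra. }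
  apply Rdiv_lt_0_compat; lra.
Qed.

Lemma kk_theta_gamma gamma : 1 < gamma -> kk gamma (theta_gamma gamma) = 0.
Proof.
  intros Hg. pose proof (sg_gt1 gamma Hg). pose proof (exp_theta_gamma gamma Hg) as E.
  rewrite kk_exp. rewrite exp_Ropp. set (y := exp (theta_gamma gamma)) in *.
  assert (0 < y) by apply exp_pos.
  replace ((1 - sqrt gamma) * y + (1 + sqrt gamma) * / y) with (((1 - sqrt gamma) * (y * y) + (1 + sqrt gamma)) / y) by (field; lra).
  rewrite E. field. lra.
Qed.

Lemma kk_zero gamma th : 1 < gamma -> kk gamma th = 0 -> th = theta_gamma gamma.
Proof.
  intros Hg Hk. destruct (Rtotal_order th (theta_gamma gamma)) as [h|[h|h]]; auto.
  - pose proof (kk_decr gamma _ _ Hg h). rewrite kk_theta_gamma in H; lra.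
  - pose proof (kk_decr gamma _ _ Hg h). rewrite kk_theta_gamma in H; lra.
Qed.

Lemma theta_gamma_pos gamma : 1 < gamma -> 0 < theta_gamma gamma.
Proof.
  intros Hg. destruct (Rle_or_lt (theta_gamma gamma) 0) as [h|h]; auto.
  exfalso. pose proof (sg_gt1 gamma Hg).
  assert (kk gamma 0 <= kk gamma (theta_gamma gamma)).
  { destruct h as [h|h]. left; apply kk_decr; auto. rewrite h; lra. }
  rewrite kk_theta_gamma in H0 by auto. rewrite kk_exp in H0. rewrite Ropp_0, exp_0 in H0. lra.
Qed.

Lemma Egam_kk d gamma th W : Egam d gamma th W = d / gamma * (kk gamma th) ^ 2 + W ^ 2.
Proof. reflexivity. Qed.

Lemma Egam_nonneg d gamma th W : 0 < d -> 1 < gamma -> 0 <= Egam d gamma th W.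
Proof.
  intros. rewrite Egam_kk. assert (0 < d / gamma) by (apply Rdiv_lt_0_compat; lra).
  assert (0 <= (kk gamma th)^2) by (apply pow2_ge_0). assert (0 <= W^2) by apply pow2_ge_0. nra.
Qed.

Lemma Omega_U d gamma th W : 0 < d -> 1 < gamma ->
  (Omega gamma th W <-> (0 < th /\ 0 < Egam d gamma th W)).
Proof.
  intros Hd Hg. unfold Omega. pose proof (Egam_nonneg d gamma th W Hd Hg).
  assert (Hdg : 0 < d / gamma) by (apply Rdiv_lt_0_compat; lra).
  split.
  - intros [Hth Hne]. split; auto. destruct H as [H|H]; auto. exfalso. apply Hne.
    rewrite Egam_kk in H.
    assert (0 <= (kk gamma th)^2) by (apply pow2_ge_0). assert (0 <= W^2) by apply pow2_ge_0.
    assert (kk gamma th ^ 2 = 0) by nra. assert (W ^ 2 = 0) by nra.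
    assert (kk gamma th = 0) by (simpl in H2; nra).
    assert (W = 0) by (simpl in H3; nra).
    rewrite (kk_zero gamma th Hg H4), H5. auto.
  - intros [Hth HE]. split; auto. intros Heq. inversion Heq. subst.
    rewrite Egam_kk, kk_theta_gamma in HE by auto. simpl in HE. lra.
Qed.

Definition UU d gamma := fun a b => 0 < a /\ 0 < Egam d gamma a b.

Lemma sinh_pos x : 0 < x -> 0 < sinh x.
Proof. intros. unfold sinh. assert (exp (- x) < exp x) by (apply exp_increasing; lra). lra. Qed.

Lemma cosh_pos x : 0 < cosh x.
Proof. unfold cosh. pose proof (exp_pos x). pose proof (exp_pos (- x)). lra. Qed.

Ltac llat := repeat first [ apply LLat_const | apply LLat_fst | apply LLat_snd | apply LLat_cosh
  | apply LLat_sinh | apply LLat_plus | apply LLat_minus | apply LLat_opp | apply LLat_pow | apply LLat_mult ].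

Lemma LLat_E d gamma p1 p2 : LLat (Egam d gamma) p1 p2.
Proof.
  change (LLat (fun a b => d / gamma * (cosh a - sqrt gamma * sinh a) ^ 2 + b ^ 2) p1 p2). llat.
Qed.

Lemma LLat_E32 d gamma p1 p2 : 0 < Egam d gamma p1 p2 -> LLat (fun a b => sqrt (Egam d gamma a b) ^ 3) p1 p2.
Proof. intros. apply LLat_pow. apply (LLat_sqrt (Egam d gamma)); auto. apply LLat_E. Qed.

Lemma E32_pos d gamma a b : 0 < Egam d gamma a b -> 0 < E32 d gamma a b.
Proof. intros. unfold E32. apply pow_lt. apply sqrt_lt_R0. auto. Qed.

Lemma LocLip_G d alpha gamma : 0 < d -> 1 < gamma ->
  LocLip (G1 d alpha gamma) (G2 d alpha gamma) (UU d gamma).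
Proof.
  intros Hd Hg. apply LocLip_of. intros p1 p2 [Hp1 HE].
  pose proof (sg_gt1 gamma Hg) as Hsg.
  split; [|split].
  - change (LLat (fun a b => - (alpha * sqrt gamma * b) / sqrt (Egam d gamma a b) ^ 3) p1 p2).
    apply LLat_div. llat. apply LLat_E32; auto. pose proof (E32_pos d gamma p1 p2 HE). unfold E32 in H. lra.
  - change (LLat (fun a b => - / sqrt d * (sqrt gamma ^ 3 / cosh a + / sinh a)
      + alpha * d * (sinh a - sqrt gamma * cosh a) * (cosh a - sqrt gamma * sinh a) / (sqrt gamma * sqrt (Egam d gamma a b) ^ 3)) p1 p2).
    apply LLat_plus.
    + apply LLat_mult; [apply LLat_const|]. apply LLat_plus.
      * apply LLat_div; [apply LLat_const|apply LLat_cosh|]. pose proof (cosh_pos p1). lra.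
      * apply (LLat_inv (fun a _ => sinh a)); [apply LLat_sinh|]. pose proof (sinh_pos p1 Hp1). lra.
    + apply LLat_div. llat. apply LLat_mult; [apply LLat_const|apply LLat_E32; auto].
      pose proof (E32_pos d gamma p1 p2 HE). unfold E32 in H. nra.
  - pose proof (LLat_E d gamma p1 p2) as [r [L [Hr [HL H]]]].
    exists (Rmin (Rmin r (p1 / 2)) (Egam d gamma p1 p2 / (4 * (L + 1)))).
    assert (Hpos : 0 < Rmin (Rmin r (p1 / 2)) (Egam d gamma p1 p2 / (4 * (L + 1)))).
    { repeat apply Rmin_pos; try lra. apply Rdiv_lt_0_compat; lra. }
    split; auto. intros q1 q2 Hq.
    pose proof (Rmin_l (Rmin r (p1 / 2)) (Egam d gamma p1 p2 / (4 * (L + 1)))).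
    pose proof (Rmin_r (Rmin r (p1 / 2)) (Egam d gamma p1 p2 / (4 * (L + 1)))).
    pose proof (Rmin_l r (p1 / 2)). pose proof (Rmin_r r (p1 / 2)).
    set (rr := Rmin (Rmin r (p1 / 2)) (Egam d gamma p1 p2 / (4 * (L + 1)))) in *.
    destruct Hq as [A B]. split.
    + unfold Rabs in A; destruct Rcase_abs in A; lra.
    + assert (I1 : inbox p1 p2 r q1 q2) by (split; lra).
      pose proof (H _ _ _ _ I1 (inbox_center p1 p2 r ltac:(lra))) as HH.
      assert (HH2 : L * (Rabs (q1 - p1) + Rabs (q2 - p2)) <= L * (2 * (Egam d gamma p1 p2 / (4 * (L + 1))))) by (apply Rmult_le_compat_l; lra).
      assert (HH3 : L * (2 * (Egam d gamma p1 p2 / (4 * (L + 1)))) <= Egam d gamma p1 p2 / 2).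
      { replace (L * (2 * (Egam d gamma p1 p2 / (4 * (L + 1))))) with ((L / (L + 1)) * (Egam d gamma p1 p2 / 2)) by (field; lra).
        assert (L / (L + 1) <= 1). { apply Rmult_le_reg_r with (L + 1); [lra|]. field_simplify; lra. }
        assert (0 <= L / (L + 1)) by (unfold Rdiv; apply Rmult_le_pos; [lra|left; apply Rinv_0_lt_compat; lra]). nra. }
      assert (HH4 : Egam d gamma p1 p2 - Egam d gamma q1 q2 <= Rabs (Egam d gamma q1 q2 - Egam d gamma p1 p2)) by (rewrite Rabs_minus_sym; apply Rle_abs). lra.
Qed.

Definition fpot d gamma th := (sqrt gamma ^ 3 * (2 * atan (exp th)) + ln ((exp th - 1) / (exp th + 1))) / sqrt d.
Definition Hf d alpha gamma th W := alpha * sqrt gamma / sqrt (Egam d gamma th W) + fpot d gamma th.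

Lemma H_deriv d alpha gamma (th W : R -> R) t :
  0 < d -> 1 < gamma ->
  derivable_pt_lim th t (G1 d alpha gamma (th t) (W t)) ->
  derivable_pt_lim W t (G2 d alpha gamma (th t) (W t)) ->
  0 < th t -> 0 < Egam d gamma (th t) (W t) ->
  derivable_pt_lim (fun s => Hf d alpha gamma (th s) (W s)) t 0.
Proof.
  intros Hd Hg dth dW Hth HE.
  apply is_derive_Reals in dth. apply is_derive_Reals in dW.
  apply is_derive_Reals.
  assert (He1 : 1 < exp (th t)) by (rewrite <- exp_0; apply exp_increasing; auto).
  unfold Hf, fpot. unfold Egam in *.
  auto_derive.
  - unfold Rminus in HE; simpl in HE. repeat split; try (eexists; eassumption); try lra; try exact HE;
      try (apply Rgt_not_eq, sqrt_lt_R0; exact HE); try (apply Rmult_lt_0_compat; [lra|apply Rinv_0_lt_compat; lra]).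
  - replace (Derive (fun x => th x) t) with (G1 d alpha gamma (th t) (W t)) by (symmetry; apply is_derive_unique; auto).
    replace (Derive (fun x => W x) t) with (G2 d alpha gamma (th t) (W t)) by (symmetry; apply is_derive_unique; auto).
    unfold G1, G2, E32, Egam in *.
    set (E0 := d / gamma * (cosh (th t) - sqrt gamma * sinh (th t)) ^ 2 + W t ^ 2) in *.
    replace (d / gamma * ((cosh (th t) + - (sqrt gamma * sinh (th t))) * ((cosh (th t) + - (sqrt gamma * sinh (th t))) * 1)) + W t * (W t * 1)) with E0 by (unfold E0; ring).
    rewrite sqrt_sqrt by lra.
    assert (HS : sqrt E0 ^ 3 = sqrt E0 * E0) by (simpl; rewrite Rmult_1_r, <- Rmult_assoc, sqrt_sqrt; lra).
    rewrite HS.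
    assert (HSp : 0 < sqrt E0) by (apply sqrt_lt_R0; lra).
    assert (Hsg : sqrt gamma * sqrt gamma = gamma) by (apply sqrt_sqrt; lra).
    assert (Hsg1 : 1 < sqrt gamma) by (apply sg_gt1; auto).
    assert (Hsd : 0 < sqrt d) by (apply sqrt_lt_R0; lra).
    set (S := sqrt E0) in *. clearbody S.
    assert (HE0 : E0 <> 0) by lra. clear HS.
    unfold E0 in *. clear E0.
    clear dth dW HE.
    set (sg := sqrt gamma) in *. rewrite <- Hsg. rewrite <- Hsg in HE0. clearbody sg.
    unfold cosh, sinh in *. rewrite exp_Ropp in *. set (e := exp (th t)) in *. clearbody e.
    set (w := W t) in *. clearbody w.
    assert (He0 : e <> 0) by lra. assert (He2 : e * e - 1 <> 0) by nra. assert (He3 : 1 + e * e <> 0) by nra.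
    assert (HE1 : d / (sg * sg) * ((e + / e) / 2 - sg * ((e - / e) / 2)) ^ 2 + w ^ 2 <> 0) by exact HE0.
    field_simplify_eq; [ring|]. 
    repeat split; try lra; try nra; auto.
    replace (d * (e * e + 1 - sg * (e * e - 1)) ^ 2 + w ^ 2 * (sg * sg * (e ^ 2 * 4)))
      with ((d / (sg * sg) * ((e + / e) / 2 - sg * ((e - / e) / 2)) ^ 2 + w ^ 2) * (sg * sg * (e ^ 2 * 4))) by (field; lra).
    apply Rmult_integral_contrapositive_currified; auto. nra.
Qed.

Lemma ln_le' x y : 0 < x -> x <= y -> ln x <= ln y.
Proof. intros H1 H2. destruct H2 as [h|h]. left; apply ln_increasing; auto. subst; lra. Qed.

Lemma exp_le' x y : x <= y -> exp x <= exp y.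
Proof. intros [h|h]. left; apply exp_increasing; auto. subst; lra. Qed.

Lemma fpot_mono d gamma a b : 0 < d -> 1 < gamma -> 0 < a -> a <= b -> fpot d gamma a <= fpot d gamma b.
Proof.
  intros Hd Hg Ha Hab. unfold fpot. pose proof (sg_gt1 gamma Hg).
  assert (Hsd : 0 < sqrt d) by (apply sqrt_lt_R0; auto).
  assert (Hea : 1 < exp a) by (rewrite <- exp_0; apply exp_increasing; auto).
  assert (Heab : exp a <= exp b) by (apply exp_le'; auto).
  assert (A1 : atan (exp a) <= atan (exp b)).
  { destruct Heab as [h|h]. left; apply atan_increasing; auto. rewrite h; lra. }
  assert (A2 : ln ((exp a - 1) / (exp a + 1)) <= ln ((exp b - 1) / (exp b + 1))).
  { apply ln_le'. apply Rdiv_lt_0_compat; lra.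
    apply Rmult_le_reg_r with ((exp a + 1) * (exp b + 1)); [nra|]. field_simplify; nra. }
  unfold Rdiv. apply Rmult_le_compat_r. left; apply Rinv_0_lt_compat; auto.
  assert (0 <= sqrt gamma ^ 3) by (apply pow_le; lra). nra.
Qed.

Lemma fpot_small d gamma B : 0 < d -> 1 < gamma -> exists th2, 0 < th2 /\ forall th, 0 < th < th2 -> fpot d gamma th < B.
Proof.
  intros Hd Hg. pose proof (sg_gt1 gamma Hg).
  assert (Hsd : 0 < sqrt d) by (apply sqrt_lt_R0; auto).
  set (K := B * sqrt d - sqrt gamma ^ 3 * PI).
  exists (ln (1 + exp K)). split.
  { rewrite <- ln_1. apply ln_increasing; [lra|]. pose proof (exp_pos K); lra. }
  intros th [H1 H2].
  assert (He : 1 < exp th) by (rewrite <- exp_0; apply exp_increasing; auto).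
  assert (He2 : exp th < 1 + exp K).
  { rewrite <- (exp_ln (1 + exp K)) by (pose proof (exp_pos K); lra). apply exp_increasing; auto. }
  assert (L1 : ln ((exp th - 1) / (exp th + 1)) < ln (exp th - 1)).
  { apply ln_increasing. apply Rdiv_lt_0_compat; lra.
    apply Rmult_lt_reg_r with (exp th + 1); [lra|]. field_simplify; nra. }
  assert (L2 : ln (exp th - 1) < K).
  { rewrite <- (ln_exp K). apply ln_increasing; lra. }
  assert (A : atan (exp th) < PI / 2) by apply atan_bound.
  assert (0 <= sqrt gamma ^ 3) by (apply pow_le; lra).
  unfold fpot. apply Rmult_lt_reg_r with (sqrt d); auto. unfold Rdiv. rewrite Rmult_assoc, Rinv_l, Rmult_1_r by lra.
  unfold K in L2. nra.
Qed.

Lemma H_const d alpha gamma a th W : 0 < d -> 1 < gamma -> 0 < a ->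
  solOn (G1 d alpha gamma) (G2 d alpha gamma) (UU d gamma) (-a) a th W ->
  forall t, -a < t < a -> Hf d alpha gamma (th t) (W t) = Hf d alpha gamma (th 0) (W 0).
Proof.
  intros Hd Hg Ha HS t Ht.
  destruct (MVT_abs (fun s => Hf d alpha gamma (th s) (W s)) (fun _ => 0) 0 t) as [c [Hc1 Hc2]].
  - intros c Hc. assert (Hcin : -a < c < a) by (unfold Rmin, Rmax in Hc; destruct Rle_dec in Hc; split; lra).
    destruct (HS c Hcin) as [d1 [d2 [U1 U2]]]. apply H_deriv; auto.
  - rewrite Rabs_R0, Rmult_0_l in Hc1. apply Rminus_diag_uniq.
    destruct (Req_dec (Hf d alpha gamma (th t) (W t) - Hf d alpha gamma (th 0) (W 0)) 0) as [e|e]; auto.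
    exfalso. apply (Rabs_no_R0 _ e). auto.
Qed.

Lemma apriori_lower d alpha gamma H0 : 0 < d -> 0 < alpha -> 1 < gamma ->
  exists thm eps, 0 < thm /\ 0 < eps /\ forall th W, 0 < th -> 0 < Egam d gamma th W ->
    Hf d alpha gamma th W = H0 -> thm <= th /\ eps <= Egam d gamma th W.
Proof.
  intros Hd Ha Hg. pose proof (sg_gt1 gamma Hg) as Hsg.
  pose proof (theta_gamma_pos gamma Hg) as Htg.
  set (th1 := theta_gamma gamma / 2).
  assert (Hdel : 0 < kk gamma th1).
  { rewrite <- (kk_theta_gamma gamma Hg). apply kk_decr; auto. unfold th1; lra. }
  set (dl := kk gamma th1) in *.
  assert (Hdg : 0 < d / gamma) by (apply Rdiv_lt_0_compat; lra).
  assert (Hsdg : 0 < sqrt (d / gamma)) by (apply sqrt_lt_R0; auto).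
  set (U1 := alpha * sqrt gamma / (sqrt (d / gamma) * dl)).
  destruct (fpot_small d gamma (H0 - U1) Hd Hg) as [th2 [Hth2 Hsmall]].
  set (thm := Rmin th1 th2).
  assert (Hthm : 0 < thm) by (apply Rmin_pos; unfold th1; lra).
  assert (Key : forall th W, 0 < th -> 0 < Egam d gamma th W -> Hf d alpha gamma th W = H0 -> thm <= th).
  { intros th W Hth HE HH. destruct (Rle_or_lt thm th) as [h|h]; auto. exfalso.
    assert (h1 : th < th1) by (pose proof (Rmin_l th1 th2); unfold thm in h; lra).
    assert (h2 : th < th2) by (pose proof (Rmin_r th1 th2); unfold thm in h; lra).
    pose proof (Hsmall th (conj Hth h2)) as Hf1.
    assert (Hk : dl < kk gamma th) by (apply kk_decr; auto).
    assert (HE2 : d / gamma * dl ^ 2 <= Egam d gamma th W).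
    { rewrite Egam_kk. assert (0 <= W ^ 2) by apply pow2_ge_0.
      assert (dl ^ 2 <= kk gamma th ^ 2) by (simpl; nra). nra. }
    assert (HS : sqrt (d / gamma) * dl <= sqrt (Egam d gamma th W)).
    { rewrite <- (sqrt_pow2 dl) by lra. rewrite <- sqrt_mult by (try lra; apply pow2_ge_0).
      apply sqrt_le_1_alt. auto. }
    assert (HU : alpha * sqrt gamma / sqrt (Egam d gamma th W) <= U1).
    { unfold U1. apply Rmult_le_compat_l. assert (0 < sqrt gamma) by lra. nra.
      apply Rinv_le_contravar; nra. }
    unfold Hf in HH. lra. }
  set (Umax := H0 - fpot d gamma thm).
  destruct (Rlt_dec 0 Umax) as [HUm|HUm].
  - exists thm, ((alpha * sqrt gamma / Umax) ^ 2). split; auto. split.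
    { apply pow_lt. apply Rdiv_lt_0_compat; [nra|auto]. }
    intros th W Hth HE HH. pose proof (Key th W Hth HE HH) as Ht. split; auto.
    pose proof (fpot_mono d gamma thm th Hd Hg Hthm Ht).
    assert (HSp : 0 < sqrt (Egam d gamma th W)) by (apply sqrt_lt_R0; auto).
    assert (Hb : alpha * sqrt gamma / sqrt (Egam d gamma th W) <= Umax) by (unfold Hf in HH; unfold Umax; lra).
    assert (Hb2 : alpha * sqrt gamma / Umax <= sqrt (Egam d gamma th W)).
    { apply Rmult_le_reg_r with Umax; auto. unfold Rdiv. rewrite Rmult_assoc, Rinv_l, Rmult_1_r by lra.
      apply Rmult_le_reg_r with (/ sqrt (Egam d gamma th W)). apply Rinv_0_lt_compat; auto.
      replace (sqrt (Egam d gamma th W) * Umax * / sqrt (Egam d gamma th W)) with Umax by (field; lra). auto. }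
    rewrite <- (sqrt_sqrt (Egam d gamma th W)) by lra.
    assert (0 <= alpha * sqrt gamma / Umax) by (left; apply Rdiv_lt_0_compat; [nra|auto]).
    simpl. nra.
  - exists thm, 1. split; auto. split; [lra|].
    intros th W Hth HE HH. exfalso. pose proof (Key th W Hth HE HH) as Ht.
    pose proof (fpot_mono d gamma thm th Hd Hg Hthm Ht).
    assert (HSp : 0 < sqrt (Egam d gamma th W)) by (apply sqrt_lt_R0; auto).
    assert (0 < alpha * sqrt gamma / sqrt (Egam d gamma th W)) by (apply Rdiv_lt_0_compat; nra).
    unfold Hf in HH. unfold Umax in HUm. lra.
Qed.

Lemma absW_le d gamma th W : 0 < d -> 1 < gamma -> Rabs W <= sqrt (Egam d gamma th W).
Proof.
  intros Hd Hg. rewrite <- sqrt_Rsqr_abs. apply sqrt_le_1_alt. rewrite Egam_kk.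
  assert (0 < d / gamma) by (apply Rdiv_lt_0_compat; lra). assert (0 <= kk gamma th ^ 2) by apply pow2_ge_0.
  unfold Rsqr. simpl. nra.
Qed.

Lemma abskk_le d gamma th W : 0 < d -> 1 < gamma ->
  Rabs (kk gamma th) <= sqrt (Egam d gamma th W) * sqrt (gamma / d).
Proof.
  intros Hd Hg. rewrite <- sqrt_mult by (try apply Egam_nonneg; auto; left; apply Rdiv_lt_0_compat; lra).
  rewrite <- sqrt_Rsqr_abs. apply sqrt_le_1_alt. rewrite Egam_kk.
  assert (0 <= W ^ 2) by apply pow2_ge_0.
  replace ((d / gamma * kk gamma th ^ 2 + W ^ 2) * (gamma / d)) with (kk gamma th ^ 2 + W ^ 2 * (gamma / d)) by (field; lra).
  assert (0 < gamma / d) by (apply Rdiv_lt_0_compat; lra).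
  unfold Rsqr. simpl. nra.
Qed.

Lemma G1_bound d alpha gamma th W : 0 < d -> 0 < alpha -> 1 < gamma -> 0 < Egam d gamma th W ->
  Rabs (G1 d alpha gamma th W) <= alpha * sqrt gamma / Egam d gamma th W.
Proof.
  intros Hd Ha Hg HE. pose proof (sg_gt1 gamma Hg).
  unfold G1, E32. set (S := sqrt (Egam d gamma th W)).
  assert (HS : 0 < S) by (apply sqrt_lt_R0; auto).
  assert (HSS : S * S = Egam d gamma th W) by (apply sqrt_sqrt; lra).
  pose proof (absW_le d gamma th W Hd Hg). fold S in H0.
  rewrite <- HSS.
  replace (- (alpha * sqrt gamma * W) / S ^ 3) with ((alpha * sqrt gamma / (S * (S * S))) * (- W)) by (field; lra).
  assert (Hc : 0 < alpha * sqrt gamma / (S * (S * S))) by (apply Rdiv_lt_0_compat; nra).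
  rewrite Rabs_mult, Rabs_Ropp, (Rabs_pos_eq (alpha * sqrt gamma / (S * (S * S)))) by lra.
  apply Rle_trans with (alpha * sqrt gamma / (S * (S * S)) * S). apply Rmult_le_compat_l; lra.
  right; field; lra.
Qed.

Lemma cosh_le_exp x : 0 <= x -> cosh x <= exp x.
Proof.
  intros H. unfold cosh. assert (exp (- x) <= exp x) by (apply exp_le'; lra). lra.
Qed.

Lemma sinh_abs_le x : 0 <= x -> Rabs (sinh x) <= cosh x.
Proof.
  intros H. unfold sinh, cosh. pose proof (exp_pos x). pose proof (exp_pos (- x)).
  assert (exp (- x) <= exp x) by (apply exp_le'; lra).
  rewrite Rabs_pos_eq; lra.
Qed.

Lemma G2_bound d alpha gamma th W : 0 < d -> 0 < alpha -> 1 < gamma -> 0 < th -> 0 < Egam d gamma th W ->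
  Rabs (G2 d alpha gamma th W) <=
   (sqrt gamma ^ 3 + / sinh th) / sqrt d + alpha * d * (1 + sqrt gamma) * sqrt (gamma / d) * exp th / (sqrt gamma * Egam d gamma th W).
Proof.
  intros Hd Ha Hg Hth HE. pose proof (sg_gt1 gamma Hg) as Hsg.
  assert (Hsd : 0 < sqrt d) by (apply sqrt_lt_R0; auto).
  assert (Hsh : 0 < sinh th) by (apply sinh_pos; auto).
  assert (Hch : 1 <= cosh th).
  { unfold cosh. pose proof (exp_ineq1_le th). pose proof (exp_ineq1_le (- th)). lra. }
  unfold G2, E32. set (S := sqrt (Egam d gamma th W)).
  assert (HS : 0 < S) by (apply sqrt_lt_R0; auto).
  assert (HSS : S * S = Egam d gamma th W) by (apply sqrt_sqrt; lra).
  pose proof (abskk_le d gamma th W Hd Hg) as Hk. fold S in Hk. unfold kk in Hk.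
  eapply Rle_trans; [apply Rabs_triang|]. apply Rplus_le_compat.
  - replace (- / sqrt d * (sqrt gamma ^ 3 / cosh th + / sinh th)) with (- ((sqrt gamma ^ 3 / cosh th + / sinh th) / sqrt d)) by (field; split; lra).
    rewrite Rabs_Ropp.
    assert (A : 0 < sqrt gamma ^ 3) by (apply pow_lt; lra).
    assert (B : sqrt gamma ^ 3 / cosh th <= sqrt gamma ^ 3).
    { apply Rmult_le_reg_r with (cosh th); [lra|]. unfold Rdiv. rewrite Rmult_assoc, Rinv_l, Rmult_1_r by lra. nra. }
    assert (C : 0 < / sinh th) by (apply Rinv_0_lt_compat; auto).
    assert (D : 0 < sqrt gamma ^ 3 / cosh th) by (apply Rdiv_lt_0_compat; lra).
    rewrite Rabs_pos_eq by (left; apply Rdiv_lt_0_compat; lra).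
    unfold Rdiv. apply Rmult_le_compat_r; [left; apply Rinv_0_lt_compat; lra|]. unfold Rdiv in B. lra.
  - rewrite <- HSS.
    replace (alpha * d * (sinh th - sqrt gamma * cosh th) * (cosh th - sqrt gamma * sinh th) / (sqrt gamma * S ^ 3))
      with ((alpha * d / (sqrt gamma * (S * (S * S)))) * ((sinh th - sqrt gamma * cosh th) * (cosh th - sqrt gamma * sinh th))) by (field; lra).
    assert (Hc : 0 < alpha * d / (sqrt gamma * (S * (S * S)))) by (apply Rdiv_lt_0_compat; [nra|]; apply Rmult_lt_0_compat; nra).
    rewrite Rabs_mult, (Rabs_pos_eq (alpha * d / (sqrt gamma * (S * (S * S))))) by lra. rewrite Rabs_mult.
    assert (E1 : Rabs (sinh th - sqrt gamma * cosh th) <= (1 + sqrt gamma) * exp th).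
    { pose proof (sinh_abs_le th ltac:(lra)). pose proof (cosh_le_exp th ltac:(lra)).
      pose proof (Rabs_triang (sinh th) (- (sqrt gamma * cosh th))). rewrite Rabs_Ropp, Rabs_mult in H1.
      rewrite (Rabs_pos_eq (sqrt gamma)) in H1 by lra. rewrite (Rabs_pos_eq (cosh th)) in H1 by lra.
      unfold Rminus. nra. }
    assert (Hsq : 0 <= sqrt (gamma / d)) by apply sqrt_pos.
    apply Rle_trans with (alpha * d / (sqrt gamma * (S * (S * S))) * (((1 + sqrt gamma) * exp th) * (S * sqrt (gamma / d)))).
    { apply Rmult_le_compat_l; [lra|]. apply Rmult_le_compat; auto using Rabs_pos. }
    right. field. split; lra.
Qed.


Lemma AP_G d alpha gamma th0 W0 : 0 < d -> 0 < alpha -> 1 < gamma -> UU d gamma th0 W0 ->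
  APprop (G1 d alpha gamma) (G2 d alpha gamma) (UU d gamma) th0 W0.
Proof.
  intros Hd Ha Hg HU0 T HT. pose proof (sg_gt1 gamma Hg) as Hsg.
  destruct (apriori_lower d alpha gamma (Hf d alpha gamma th0 W0) Hd Ha Hg) as [thm [eps [Hthm [Heps Hlow]]]].
  set (C1 := alpha * sqrt gamma / eps).
  assert (HC1 : 0 < C1) by (apply Rdiv_lt_0_compat; nra).
  set (thmax := th0 + C1 * T).
  set (C2 := (sqrt gamma ^ 3 + / sinh thm) / sqrt d + alpha * d * (1 + sqrt gamma) * sqrt (gamma / d) * exp thmax / (sqrt gamma * eps)).
  exists (Rmax C1 C2), (fun q1 q2 => thm <= q1 /\ eps <= Egam d gamma q1 q2).
  split; [apply Rle_trans with C1; [lra|apply Rmax_l]|].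
  split; [intros q1 q2 [A B]; split; lra|].
  split.
  - intros q1 q2 Hcl. split.
    + destruct (Rle_or_lt thm q1) as [h|h]; auto. exfalso.
      destruct (Hcl ((thm - q1) / 2) ltac:(lra)) as [k1 [k2 [[A B] [C D]]]].
      unfold Rabs in C; destruct Rcase_abs in C; lra.
    + destruct (Rle_or_lt eps (Egam d gamma q1 q2)) as [h|h]; auto. exfalso.
      destruct (LLat_E d gamma q1 q2) as [r [L [Hr [HL HLip]]]].
      set (e := Rmin r ((eps - Egam d gamma q1 q2) / (4 * (L + 1)))).
      assert (He : 0 < e) by (apply Rmin_pos; auto; apply Rdiv_lt_0_compat; lra).
      destruct (Hcl e He) as [k1 [k2 [[A B] [C D]]]].
      pose proof (Rmin_l r ((eps - Egam d gamma q1 q2) / (4 * (L + 1)))) as E1.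
      pose proof (Rmin_r r ((eps - Egam d gamma q1 q2) / (4 * (L + 1)))) as E2. fold e in E1, E2.
      assert (I1 : inbox q1 q2 r k1 k2) by (split; lra).
      pose proof (HLip _ _ _ _ I1 (inbox_center q1 q2 r ltac:(lra))) as HH.
      assert (HH2 : L * (Rabs (k1 - q1) + Rabs (k2 - q2)) <= L * (2 * ((eps - Egam d gamma q1 q2) / (4 * (L + 1))))) by (apply Rmult_le_compat_l; lra).
      assert (HH3 : L * (2 * ((eps - Egam d gamma q1 q2) / (4 * (L + 1)))) < eps - Egam d gamma q1 q2).
      { replace (L * (2 * ((eps - Egam d gamma q1 q2) / (4 * (L + 1))))) with ((L / (L + 1)) * ((eps - Egam d gamma q1 q2) / 2)) by (field; lra).
        assert (L / (L + 1) <= 1). { apply Rmult_le_reg_r with (L + 1); [lra|]. field_simplify; lra. }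
        assert (0 <= L / (L + 1)) by (unfold Rdiv; apply Rmult_le_pos; [lra|left; apply Rinv_0_lt_compat; lra]).
        apply Rle_lt_trans with (1 * ((eps - Egam d gamma q1 q2) / 2)); [apply Rmult_le_compat_r; lra|lra]. }
      assert (HH4 : Egam d gamma k1 k2 - Egam d gamma q1 q2 <= Rabs (Egam d gamma k1 k2 - Egam d gamma q1 q2)) by apply Rle_abs.
      lra.
  - intros a th W [Ha0 HaT] HS E1 E2.
    assert (HK : forall t, -a < t < a -> thm <= th t /\ eps <= Egam d gamma (th t) (W t)).
    { intros t Ht. destruct (HS t Ht) as [_ [_ [U1 U2]]]. apply Hlow; auto.
      rewrite (H_const d alpha gamma a th W Hd Hg Ha0 HS t Ht). rewrite E1, E2. auto. }
    assert (HG1 : forall t, -a < t < a -> Rabs (G1 d alpha gamma (th t) (W t)) <= C1).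
    { intros t Ht. destruct (HK t Ht) as [_ B]. eapply Rle_trans; [apply G1_bound; auto; lra|].
      unfold C1. apply Rmult_le_compat_l; [nra|]. apply Rinv_le_contravar; auto. }
    assert (Hthb : forall t, -a < t < a -> th t <= thmax).
    { intros t Ht.
      destruct (MVT_abs th (fun c => G1 d alpha gamma (th c) (W c)) 0 t) as [c [Hc1 Hc2]].
      { intros c Hc. apply HS. unfold Rmin, Rmax in Hc; destruct Rle_dec in Hc; split; lra. }
      assert (Hcin : -a < c < a) by (unfold Rmin, Rmax in Hc2; destruct Rle_dec in Hc2; split; lra).
      pose proof (HG1 c Hcin). rewrite Rminus_0_r in Hc1.
      assert (Rabs t <= T) by (unfold Rabs; destruct Rcase_abs; lra).
      assert (Rabs (th t - th 0) <= C1 * T).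
      { rewrite Hc1. apply Rmult_le_compat; auto using Rabs_pos. }
      unfold thmax. rewrite <- E1. pose proof (Rle_abs (th t - th 0)). lra. }
    intros t Ht. destruct (HK t Ht) as [A B]. split; [split; auto|]. split.
    + eapply Rle_trans; [apply HG1; auto|apply Rmax_l].
    + eapply Rle_trans; [|apply Rmax_r]. unfold C2.
      assert (Hth : 0 < th t) by lra.
      assert (HE : 0 < Egam d gamma (th t) (W t)) by lra.
      eapply Rle_trans; [apply G2_bound; auto|].
      assert (Hsd : 0 < sqrt d) by (apply sqrt_lt_R0; auto).
      assert (Hs1 : / sinh (th t) <= / sinh thm).
      { apply Rinv_le_contravar. apply sinh_pos; auto. destruct A as [h|h]. left; apply sinh_lt; auto. rewrite h; lra. }
      assert (Hex : exp (th t) <= exp thmax) by (apply exp_le'; apply Hthb; auto).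
      assert (Hie : / Egam d gamma (th t) (W t) <= / eps) by (apply Rinv_le_contravar; auto).
      apply Rplus_le_compat.
      * unfold Rdiv. apply Rmult_le_compat_r; [left; apply Rinv_0_lt_compat; auto|]. lra.
      * assert (Hk : 0 <= alpha * d * (1 + sqrt gamma) * sqrt (gamma / d)).
        { assert (0 <= sqrt (gamma / d)) by apply sqrt_pos. apply Rmult_le_pos; [|auto]. apply Rmult_le_pos; [apply Rmult_le_pos; lra|lra]. }
        unfold Rdiv. rewrite !Rinv_mult. 
        assert (0 < / sqrt gamma) by (apply Rinv_0_lt_compat; lra).
        assert (0 < exp (th t)) by apply exp_pos.
        assert (0 < / Egam d gamma (th t) (W t)) by (apply Rinv_0_lt_compat; auto).
        apply Rmult_le_compat; try nra.
Qed.

Theorem theorem3 (d alpha gamma : R) (hd : 0 < d) (halpha : 0 < alpha) (hgamma : 1 < gamma)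
  (th0 W0 : R) (h0 : Omega gamma th0 W0) :
  exists th W : R -> R,
    is_global_solution d alpha gamma th0 W0 th W /\
    (forall th' W' : R -> R, is_global_solution d alpha gamma th0 W0 th' W' ->
       forall t, th' t = th t /\ W' t = W t).
Proof.
  assert (HU0 : UU d gamma th0 W0) by (apply (proj1 (Omega_U d gamma th0 W0 hd hgamma)); auto).
  pose proof (LocLip_G d alpha gamma hd hgamma) as HLL.
  destruct (global_sol _ _ _ th0 W0 HLL HU0 (AP_G d alpha gamma th0 W0 hd halpha hgamma HU0)) as [X [Y [E1 [E2 HS]]]].
  exists X, Y. split.
  - unfold is_global_solution. split; [intro t; apply HS|]. split; [intro t; apply HS|].
    split; [intro t; destruct (HS t) as [a [b c]]; apply (comp_continuity _ _ _ X Y t HLL a b c)|].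
    split; [intro t; destruct (HS t) as [a [b c]]; apply (comp_continuity _ _ _ X Y t HLL a b c)|].
    split; auto. split; auto.
    intros t. apply (proj2 (Omega_U d gamma (X t) (Y t) hd hgamma)). apply HS.
  - intros th' W' [D1 [D2 [_ [_ [F1 [F2 HO]]]]]] t.
    apply (global_uniq _ _ (UU d gamma) th' W' X Y HLL); auto.
    + intros s. split; [apply D1|split; [apply D2|]]. apply (proj1 (Omega_U d gamma _ _ hd hgamma)); auto.
    + congruence.
    + congruence.
Qed.
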